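(* Let $\Lambda=\{z\in\mathbb C:\ \operatorname{Im} z>0\}$ with the measure $d\mu(z)=\frac{da\,db}{4b^2}$ for $z=a+ib$. For $\tau\in\mathbb C$, $z\in\Lambda$, $x\in\mathbb R$ put $$K(\tau;z,x)=\left(\frac{2i(x-z)(x-\overline z)}{z-\overline z}\right)^{\tau}$$ (the base is a positive real number, and the principal branch of the power is used), and for $f\in C_c^\infty(\Lambda)$ define the Fourier transform $$Jf(\tau;x)=\int_\Lambda K(\tau;z,x)\,f(z)\,d\mu(z),\qquad \tau\in\mathbb C,\ x\in\mathbb R .$$ For a function $\Phi(\tau;x)$ on $\mathbb C\times\mathbb R$ let $T_+\Phi(\tau;x)=\Phi(\tau+1;x)$ and $T_-\Phi(\tau;x)=\Phi(\tau-1;x)$; in an expression $c(\tau)\,x^p\frac{\partial^q}{\partial x^q}T_\pm$ the shift is applied first and then the result is differentiated in $x$ and multiplied by $x^p c(\tau)$. Let $\frac{\partial}{\partial z}=\frac12\bigl(\frac{\partial}{\partial a}-i\frac{\partial}{\partial b}\bigr)$, $\frac{\partial}{\partial \overline z}=\frac12\bigl(\frac{\partial}{\partial a}+i\frac{\partial}{\partial b}\bigr)$ be the Wirtinger derivatives. Then for every $f\in C_c^\infty(\Lambda)$, every $\tau\in\mathbb C\setminus\{-1,-\tfrac12\}$ and every $x\in\mathbb R$ the following identities hold: $$J\Bigl(\tfrac{1}{z-\overline z}f\Bigr)=\Bigl[\tfrac{1}{4i(1+\tau)(1+2\tau)}\tfrac{\partial^2}{\partial x^2}T_+-\tfrac{2i\tau}{2(1+2\tau)}T_-\Bigr]Jf;$$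 $$J\Bigl(\bigl(\tfrac{\partial}{\partial z}-\tfrac{\partial}{\partial\overline z}\bigr)f\Bigr)=\Bigl[\tfrac{2+\tau}{2i(1+\tau)(1+2\tau)}\tfrac{\partial^2}{\partial x^2}T_++\tfrac{2i\tau(-1+\tau)}{1+2\tau}T_-\Bigr]Jf;$$ $$J\Bigl(\bigl(z\tfrac{\partial}{\partial z}-\overline z\tfrac{\partial}{\partial\overline z}\bigr)f\Bigr)=\Bigl[\tfrac{2+\tau}{2i(1+\tau)(1+2\tau)}x\tfrac{\partial^2}{\partial x^2}T_+-\tfrac{2+\tau}{2i(1+\tau)}\tfrac{\partial}{\partial x}T_++\tfrac{2i(-1+\tau)\tau}{1+2\tau}xT_-\Bigr]Jf;$$ $$J\Bigl(\bigl(z^2\tfrac{\partial}{\partial z}-\overline z^{\,2}\tfrac{\partial}{\partial\overline z}\bigr)f\Bigr)=\Bigl[\tfrac{2+\tau}{2i(1+\tau)(1+2\tau)}x^2\tfrac{\partial^2}{\partial x^2}T_+-\tfrac{2(2+\tau)}{2i(1+\tau)}x\tfrac{\partial}{\partial x}T_++\tfrac{2(2+\tau)}{2i}T_++\tfrac{2i\tau(-1+\tau)}{1+2\tau}x^2T_-\Bigr]Jf,$$ where both sides are evaluated at $(\tau;x)$.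
   Context: $\Lambda$ is the Lobachevsky (hyperbolic) plane realized as the upper half-plane; $\mu$ is the $\mathrm{SL}(2,\mathbb R)$-invariant measure on it. $C_c^\infty(\Lambda)$ denotes smooth compactly supported functions on $\Lambda$. The operator $\frac1{z-\overline z}$ denotes multiplication by the function $z\mapsto \frac1{z-\overline z}$. *)

(* Defs.v *)
From Stdlib Require Import Reals.
From Coquelicot Require Import Coquelicot.
Open Scope R_scope.

Definition pt (a b : R) : C := (a, b).

Definition DerivC (g : R -> C) (x : R) : C :=
  (Derive (fun y => Re (g y)) x, Derive (fun y => Im (g y)) x).
Definition ex_DerivC (g : R -> C) (x : R) : Prop :=
  ex_derive (fun y => Re (g y)) x /\ ex_derive (fun y => Im (g y)) x.

(* Partial derivatives of f : R -> R -> C, f a b = f(a + i b). *)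
Definition d_a (f : R -> R -> C) : R -> R -> C := fun a b => DerivC (fun a' => f a' b) a.
Definition d_b (f : R -> R -> C) : R -> R -> C := fun a b => DerivC (fun b' => f a b') b.

Definition d_z (f : R -> R -> C) : R -> R -> C :=
  fun a b => Cmult (/ 2) (Cminus (d_a f a b) (Cmult Ci (d_b f a b))).
Definition d_zbar (f : R -> R -> C) : R -> R -> C :=
  fun a b => Cmult (/ 2) (Cplus (d_a f a b) (Cmult Ci (d_b f a b))).

Fixpoint CkLam (k : nat) (g : R -> R -> R) : Prop :=
  match k with
  | O => forall a b, 0 < b -> continuity_2d_pt g a b
  | S m =>
      (forall a b, 0 < b -> continuity_2d_pt g a b) /\
      (forall a b, 0 < b -> ex_derive (fun a' => g a' b) a /\ ex_derive (fun b' => g a b') b) /\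
      CkLam m (fun a b => Derive (fun a' => g a' b) a) /\
      CkLam m (fun a b => Derive (fun b' => g a b') b)
  end.

Definition Cc_infty_Lam (f : R -> R -> C) : Prop :=
  (forall k, CkLam k (fun a b => Re (f a b)) /\ CkLam k (fun a b => Im (f a b))) /\
  exists a0 a1 b0 b1, 0 < b0 /\
    forall a b, 0 < b -> f a b <> 0%C -> a0 <= a <= a1 /\ b0 <= b <= b1.

(* Integral over Lambda w.r.t. d mu = da db / (4 b^2): iterated (improper)
   integral, first in a over R, then in b over (0, +oo). *)
Definition int_Lam (g : R -> R -> C) : C :=
  @RInt_gen C_R_CompleteNormedModule (fun b => @RInt_gen C_R_CompleteNormedModule (fun a => Cmult (g a b) (/ (4 * b ^ 2))%R)
                              (Rbar_locally m_infty) (Rbar_locally p_infty))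
           (at_right 0) (Rbar_locally p_infty).

Definition Cpow_pos (r : R) (tau : C) : C :=
  Cmult (exp (Re tau * ln r)) (cos (Im tau * ln r), sin (Im tau * ln r)).

(* Kernel K(tau; z, x) = (2i (x - z)(x - zbar)/(z - zbar))^tau; the base is a
   positive real number, so we take its real part as the base. *)
Definition Kker (tau : C) (a b : R) (x : R) : C :=
  let z := pt a b in
  Cpow_pos (Re (Cdiv (Cmult (Cmult (Cmult 2 Ci) (Cminus x z)) (Cminus x (Cconj z)))
                     (Cminus z (Cconj z)))) tau.

Definition J (f : R -> R -> C) (tau : C) (x : R) : C :=
  int_Lam (fun a b => Cmult (Kker tau a b x) (f a b)).

(* Main.v *)
Require Import Defs.
From Stdlib Require Import Reals Lra Psatz FunctionalExtensionality Classical.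
From Coquelicot Require Import Coquelicot.
Open Scope R_scope.


Open Scope R_scope.

Lemma C_ext (z w : C) : Re z = Re w -> Im z = Im w -> z = w.
Proof. destruct z, w; unfold Re, Im; simpl; intros; subst; reflexivity. Qed.

Lemma Re_Cplus (a b : C) : Re (Cplus a b) = Re a + Re b. Proof. destruct a, b; reflexivity. Qed.
Lemma Im_Cplus (a b : C) : Im (Cplus a b) = Im a + Im b. Proof. destruct a, b; reflexivity. Qed.
Lemma Re_Cminus (a b : C) : Re (Cminus a b) = Re a - Re b. Proof. destruct a, b; reflexivity. Qed.
Lemma Im_Cminus (a b : C) : Im (Cminus a b) = Im a - Im b. Proof. destruct a, b; reflexivity. Qed.
Lemma Re_Copp (a : C) : Re (Copp a) = - Re a. Proof. destruct a; reflexivity. Qed.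
Lemma Im_Copp (a : C) : Im (Copp a) = - Im a. Proof. destruct a; reflexivity. Qed.
Lemma Re_Cmult (a b : C) : Re (Cmult a b) = Re a * Re b - Im a * Im b. Proof. destruct a, b; reflexivity. Qed.
Lemma Im_Cmult (a b : C) : Im (Cmult a b) = Re a * Im b + Im a * Re b. Proof. destruct a, b; reflexivity. Qed.
Lemma Re_RtoC (r : R) : Re (RtoC r) = r. Proof. reflexivity. Qed.
Lemma Im_RtoC (r : R) : Im (RtoC r) = 0. Proof. reflexivity. Qed.
Lemma Re_Ci : Re Ci = 0. Proof. reflexivity. Qed.
Lemma Im_Ci : Im Ci = 1. Proof. reflexivity. Qed.
Lemma Re_Cconj (a : C) : Re (Cconj a) = Re a. Proof. destruct a; reflexivity. Qed.
Lemma Im_Cconj (a : C) : Im (Cconj a) = - Im a. Proof. destruct a; reflexivity. Qed.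
Lemma Re_pt a b : Re (pt a b) = a. Proof. reflexivity. Qed.
Lemma Im_pt a b : Im (pt a b) = b. Proof. reflexivity. Qed.
Lemma Re_Cinv (a : C) : Re (Cinv a) = Re a / (Re a ^ 2 + Im a ^ 2). Proof. destruct a; reflexivity. Qed.
Lemma Im_Cinv (a : C) : Im (Cinv a) = - Im a / (Re a ^ 2 + Im a ^ 2). Proof. destruct a; reflexivity. Qed.
Lemma Re_Cdiv (a b : C) : Re (Cdiv a b) = Re (Cmult a (Cinv b)). Proof. reflexivity. Qed.
Lemma Im_Cdiv (a b : C) : Im (Cdiv a b) = Im (Cmult a (Cinv b)). Proof. reflexivity. Qed.
Lemma Re_Cpow r s : Re (Cpow_pos r s) = exp (Re s * ln r) * cos (Im s * ln r).
Proof. unfold Cpow_pos. unfold Cmult at 1. unfold RtoC. unfold Re at 1. cbv beta iota delta [fst snd]. ring. Qed.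
Lemma Im_Cpow r s : Im (Cpow_pos r s) = exp (Re s * ln r) * sin (Im s * ln r).
Proof. unfold Cpow_pos. unfold Cmult at 1. unfold RtoC. unfold Im at 1. cbv beta iota delta [fst snd]. ring. Qed.
Lemma Re_0 : Re 0%C = 0. Proof. reflexivity. Qed.
Lemma Im_0 : Im 0%C = 0. Proof. reflexivity. Qed.
Lemma Re_1 : Re 1%C = 1. Proof. reflexivity. Qed.
Lemma Im_1 : Im 1%C = 0. Proof. reflexivity. Qed.

Ltac csimp := repeat progress rewrite ?Re_Cplus, ?Im_Cplus, ?Re_Cminus, ?Im_Cminus, ?Re_Copp, ?Im_Copp,
  ?Re_Cmult, ?Im_Cmult, ?Re_RtoC, ?Im_RtoC, ?Re_Ci, ?Im_Ci, ?Re_Cconj, ?Im_Cconj, ?Re_pt, ?Im_pt,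
  ?Re_Cdiv, ?Im_Cdiv, ?Re_Cinv, ?Im_Cinv, ?Re_Cpow, ?Im_Cpow, ?Re_0, ?Im_0, ?Re_1, ?Im_1.
Ltac csimpH H := repeat progress rewrite ?Re_Cplus, ?Im_Cplus, ?Re_Cminus, ?Im_Cminus, ?Re_Copp, ?Im_Copp,
  ?Re_Cmult, ?Im_Cmult, ?Re_RtoC, ?Im_RtoC, ?Re_Ci, ?Im_Ci, ?Re_Cconj, ?Im_Cconj, ?Re_pt, ?Im_pt,
  ?Re_Cdiv, ?Im_Cdiv, ?Re_Cinv, ?Im_Cinv, ?Re_Cpow, ?Im_Cpow, ?Re_0, ?Im_0, ?Re_1, ?Im_1 in H.

Lemma is_derive_eq (f : R -> R) (x l l' : R) : is_derive f x l -> l = l' -> is_derive f x l'.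
Proof. intros H ->; exact H. Qed.

Lemma isd_plus (f g : R -> R) x df dg : is_derive f x df -> is_derive g x dg ->
  is_derive (fun y => f y + g y) x (df + dg).
Proof. intros; apply (is_derive_plus f g); auto. Qed.
Lemma isd_minus (f g : R -> R) x df dg : is_derive f x df -> is_derive g x dg ->
  is_derive (fun y => f y - g y) x (df - dg).
Proof. intros; apply (is_derive_minus f g); auto. Qed.
Lemma isd_mult (f g : R -> R) x df dg : is_derive f x df -> is_derive g x dg ->
  is_derive (fun y => f y * g y) x (df * g x + f x * dg).
Proof. intros; apply (is_derive_mult f g); auto. intros; apply Rmult_comm. Qed.
Lemma isd_const (c : R) x : is_derive (fun _ => c) x 0.
Proof. apply (@is_derive_const R_AbsRing R_NormedModule). Qed.
Lemma isd_id x : is_derive (fun y => y) x 1.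
Proof. apply (@is_derive_id R_AbsRing). Qed.
Lemma isd_comp (f g : R -> R) x df dg : is_derive f (g x) df -> is_derive g x dg ->
  is_derive (fun y => f (g y)) x (dg * df).
Proof. intros; apply (is_derive_comp f g); auto. Qed.

Definition CD (g : R -> C) (x : R) (l : C) : Prop :=
  is_derive (fun y => Re (g y)) x (Re l) /\ is_derive (fun y => Im (g y)) x (Im l).

Lemma CD_plus g h x l m : CD g x l -> CD h x m -> CD (fun y => Cplus (g y) (h y)) x (Cplus l m).
Proof.
  intros [H1 H2] [H3 H4]; split; csimp.
  - apply (is_derive_ext (fun y => Re (g y) + Re (h y))). intro; csimp; reflexivity. apply isd_plus; auto.
  - apply (is_derive_ext (fun y => Im (g y) + Im (h y))). intro; csimp; reflexivity. apply isd_plus; auto.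
Qed.
Lemma CD_minus g h x l m : CD g x l -> CD h x m -> CD (fun y => Cminus (g y) (h y)) x (Cminus l m).
Proof.
  intros [H1 H2] [H3 H4]; split; csimp.
  - apply (is_derive_ext (fun y => Re (g y) - Re (h y))). intro; csimp; reflexivity. apply isd_minus; auto.
  - apply (is_derive_ext (fun y => Im (g y) - Im (h y))). intro; csimp; reflexivity. apply isd_minus; auto.
Qed.
Lemma CD_mult g h x l m : CD g x l -> CD h x m ->
  CD (fun y => Cmult (g y) (h y)) x (Cplus (Cmult l (h x)) (Cmult (g x) m)).
Proof.
  intros [H1 H2] [H3 H4]; split; csimp.
  - apply (is_derive_ext (fun y => Re (g y) * Re (h y) - Im (g y) * Im (h y))). intro; csimp; reflexivity.
    eapply is_derive_eq. apply isd_minus; apply isd_mult; eauto. cbv beta; ring.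
  - apply (is_derive_ext (fun y => Re (g y) * Im (h y) + Im (g y) * Re (h y))). intro; csimp; reflexivity.
    eapply is_derive_eq. apply isd_plus; apply isd_mult; eauto. cbv beta; ring.
Qed.
Lemma CD_const (c : C) x : CD (fun _ => c) x 0%C.
Proof. split; csimp; apply isd_const. Qed.
Lemma CD_R (f : R -> R) x df : is_derive f x df -> CD (fun y => RtoC (f y)) x (RtoC df).
Proof. intros H; split. apply (is_derive_ext f); [intro; reflexivity| exact H]. apply (is_derive_ext (fun _ => 0)); [intro; reflexivity| apply isd_const]. Qed.
Lemma CD_comp (G : R -> C) (g : R -> R) x l dg : CD G (g x) l -> is_derive g x dg ->
  CD (fun y => G (g y)) x (Cmult (RtoC dg) l).
Proof.
  intros [H1 H2] H; split; csimp.
  - eapply is_derive_eq. apply (isd_comp (fun y => Re (G y))); eauto. cbv beta; ring.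
  - eapply is_derive_eq. apply (isd_comp (fun y => Im (G y))); eauto. cbv beta; ring.
Qed.
Lemma CD_ext g h x l : (forall y, g y = h y) -> CD g x l -> CD h x l.
Proof.
  intros E [H1 H2]; split. apply (is_derive_ext (fun y => Re (g y))); [intro; rewrite E; reflexivity|exact H1]. apply (is_derive_ext (fun y => Im (g y))); [intro; rewrite E; reflexivity|exact H2].
Qed.
Lemma CD_eq g x l l' : CD g x l -> l = l' -> CD g x l'.
Proof. intros H ->; exact H. Qed.

Lemma Cpow_pos_shift r s : 0 < r -> Cpow_pos r (Cplus s 1) = Cmult (RtoC r) (Cpow_pos r s).
Proof.
  intros Hr; apply C_ext; csimp;
  replace ((Re s + 1) * ln r) with (Re s * ln r + ln r) by ring;
  replace (Im s + 0) with (Im s) by ring;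
  rewrite exp_plus, exp_ln by exact Hr; ring.
Qed.

Lemma CD_Cpow r s : 0 < r -> CD (fun y => Cpow_pos y s) r (Cmult s (Cpow_pos r (Cminus s 1))).
Proof.
  intros Hr.
  assert (Hl : forall c, is_derive (fun y => c * ln y) r (c * / r)).
  { intros c; apply is_derive_scal, is_derive_ln; auto. }
  assert (E : exp ((Re s - 1) * ln r) = exp (Re s * ln r) / r).
  { replace ((Re s - 1) * ln r) with (Re s * ln r + - ln r) by ring.
    rewrite exp_plus, exp_Ropp, exp_ln by exact Hr. reflexivity. }
  split; csimp; rewrite E; replace (Im s - 0) with (Im s) by ring.
  - apply (is_derive_ext (fun y => exp (Re s * ln y) * cos (Im s * ln y))). intro; symmetry; apply Re_Cpow.
    eapply is_derive_eq. apply isd_mult.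
    apply (isd_comp exp (fun y => Re s * ln y)); [apply is_derive_exp| apply Hl].
    apply (isd_comp cos (fun y => Im s * ln y)); [apply is_derive_cos| apply Hl].
    cbv beta; field. lra.
  - apply (is_derive_ext (fun y => exp (Re s * ln y) * sin (Im s * ln y))). intro; symmetry; apply Im_Cpow.
    eapply is_derive_eq. apply isd_mult.
    apply (isd_comp exp (fun y => Re s * ln y)); [apply is_derive_exp| apply Hl].
    apply (isd_comp sin (fun y => Im s * ln y)); [apply is_derive_sin| apply Hl].
    cbv beta; field. lra.
Qed.


Open Scope R_scope.

Definition ww (u b : R) : R := (u * u + b * b) / b.
Definition KK (s : C) (u b : R) : C := Cpow_pos (ww u b) s.

Lemma ww_pos u b : 0 < b -> 0 < ww u b.
Proof. intros; unfold ww; apply Rdiv_lt_0_compat; nra. Qed.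

Lemma Kker_eq s a b x : 0 < b -> Kker s a b x = KK s (x - a) b.
Proof.
  intros Hb; unfold Kker, KK; f_equal. unfold pt. csimp. unfold ww.
  field. split; [lra|]. intro H. nra.
Qed.

Lemma ww_du u b : 0 < b -> is_derive (fun u => ww u b) u (2 * u / b).
Proof. intros Hb; unfold ww; auto_derive. lra. field; lra. Qed.
Lemma ww_db u b : 0 < b -> is_derive (fun b => ww u b) b (1 - u * u / (b * b)).
Proof. intros Hb; unfold ww; auto_derive. lra. field; lra. Qed.

Lemma KK_du s u b : 0 < b ->
  CD (fun u => KK s u b) u (Cmult (RtoC (2 * u / b)) (Cmult s (KK (Cminus s 1) u b))).
Proof.
  intros Hb; unfold KK.
  apply (CD_comp (fun r => Cpow_pos r s) (fun u => ww u b)).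
  apply CD_Cpow, ww_pos, Hb. apply ww_du, Hb.
Qed.
Lemma KK_db s u b : 0 < b ->
  CD (fun b => KK s u b) b (Cmult (RtoC (1 - u * u / (b * b))) (Cmult s (KK (Cminus s 1) u b))).
Proof.
  intros Hb; unfold KK.
  apply (CD_comp (fun r => Cpow_pos r s) (fun b => ww u b)).
  apply CD_Cpow, ww_pos, Hb. apply ww_db, Hb.
Qed.
Lemma KK_shift s u b : 0 < b -> KK (Cplus s 1) u b = Cmult (RtoC (ww u b)) (KK s u b).
Proof. intros Hb; unfold KK; apply Cpow_pos_shift, ww_pos, Hb. Qed.


Open Scope R_scope.

Definition Good (G : R -> R -> R) := forall a b, 0 < b -> continuity_2d_pt G a b.
Definition GoodC (g : R -> R -> C) := Good (fun a b => Re (g a b)) /\ Good (fun a b => Im (g a b)).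

Lemma half_pos b : 0 < b -> 0 < b / 2.
Proof. lra. Qed.

Lemma near_pos b v : 0 < b -> Rabs (v - b) < b / 2 -> 0 < v.
Proof. intros Hb H; apply Rabs_def2 in H; lra. Qed.

Lemma Good_ext G H : (forall a b, 0 < b -> G a b = H a b) -> Good G -> Good H.
Proof.
  intros E HG a b Hb. apply continuity_2d_pt_ext_loc with G; [|apply HG, Hb].
  exists (mkposreal _ (half_pos b Hb)); simpl; intros u v _ Hv. apply E. eapply near_pos; eauto.
Qed.
Lemma Good_plus G H : Good G -> Good H -> Good (fun a b => G a b + H a b).
Proof. intros HG HH a b Hb; apply continuity_2d_pt_plus; auto. Qed.
Lemma Good_minus G H : Good G -> Good H -> Good (fun a b => G a b - H a b).
Proof. intros HG HH a b Hb; apply continuity_2d_pt_minus; auto. Qed.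
Lemma Good_mult G H : Good G -> Good H -> Good (fun a b => G a b * H a b).
Proof. intros HG HH a b Hb; apply continuity_2d_pt_mult; auto. Qed.
Lemma Good_opp G : Good G -> Good (fun a b => - G a b).
Proof. intros HG a b Hb; apply continuity_2d_pt_opp; auto. Qed.
Lemma Good_const c : Good (fun _ _ => c).
Proof. intros a b Hb; apply continuity_2d_pt_const. Qed.
Lemma Good_id1 : Good (fun a _ => a).
Proof. intros a b Hb; apply continuity_2d_pt_id1. Qed.
Lemma Good_id2 : Good (fun _ b => b).
Proof. intros a b Hb; apply continuity_2d_pt_id2. Qed.
Lemma Good_comp1 (phi : R -> R) G : Good G -> (forall a b, 0 < b -> continuity_pt phi (G a b)) ->
  Good (fun a b => phi (G a b)).
Proof. intros HG Hp a b Hb; apply continuity_1d_2d_pt_comp; auto. Qed.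
Lemma Good_inv G : Good G -> (forall a b, 0 < b -> G a b <> 0) -> Good (fun a b => / G a b).
Proof. intros HG Hn a b Hb; apply continuity_2d_pt_inv; auto. Qed.

Lemma Good_shift x P : Good P -> Good (fun a b => P (x - a) b).
Proof.
  intros HP a b Hb eps. destruct (HP (x - a) b Hb eps) as [d Hd].
  exists d; intros u v Hu Hv. apply Hd; auto.
  replace (x - u - (x - a)) with (- (u - a)) by ring. rewrite Rabs_Ropp; auto.
Qed.

Lemma Good_ww : Good ww.
Proof.
  unfold ww. apply Good_ext with (fun u b => (u * u + b * b) * / b).
  { intros; reflexivity. }
  apply Good_mult. apply Good_plus; apply Good_mult; (apply Good_id1 || apply Good_id2).
  apply Good_inv. apply Good_id2. intros; lra.
Qed.

Lemma GoodC_KK s : GoodC (KK s).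
Proof.
  assert (Hl : Good (fun u b => ln (ww u b))).
  { apply Good_comp1. apply Good_ww. intros a b Hb.
    apply continuity_pt_filterlim. apply continuous_ln, ww_pos, Hb. }
  assert (He : Good (fun u b => exp (Re s * ln (ww u b)))).
  { apply Good_comp1 with (G := fun u b => Re s * ln (ww u b)).
    apply Good_mult; [apply Good_const | exact Hl].
    intros; apply derivable_continuous_pt, derivable_pt_exp. }
  split; unfold KK.
  - apply Good_ext with (fun u b => exp (Re s * ln (ww u b)) * cos (Im s * ln (ww u b))).
    { intros; symmetry; apply Re_Cpow. }
    apply Good_mult; auto. apply Good_comp1 with (G := fun u b => Im s * ln (ww u b)).
    apply Good_mult; [apply Good_const | exact Hl]. intros; apply continuity_cos.
  - apply Good_ext with (fun u b => exp (Re s * ln (ww u b)) * sin (Im s * ln (ww u b))).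
    { intros; symmetry; apply Im_Cpow. }
    apply Good_mult; auto. apply Good_comp1 with (G := fun u b => Im s * ln (ww u b)).
    apply Good_mult; [apply Good_const | exact Hl]. intros; apply continuity_sin.
Qed.

Lemma GoodC_ext g h : (forall a b, 0 < b -> g a b = h a b) -> GoodC g -> GoodC h.
Proof.
  intros E [H1 H2]; split.
  - apply Good_ext with (fun a b => Re (g a b)); auto. intros; rewrite E; auto.
  - apply Good_ext with (fun a b => Im (g a b)); auto. intros; rewrite E; auto.
Qed.
Lemma GoodC_plus g h : GoodC g -> GoodC h -> GoodC (fun a b => Cplus (g a b) (h a b)).
Proof.
  intros [H1 H2] [H3 H4]; split.
  - apply Good_ext with (fun a b => Re (g a b) + Re (h a b)). intros; csimp; auto. apply Good_plus; auto.
  - apply Good_ext with (fun a b => Im (g a b) + Im (h a b)). intros; csimp; auto. apply Good_plus; auto.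
Qed.
Lemma GoodC_minus g h : GoodC g -> GoodC h -> GoodC (fun a b => Cminus (g a b) (h a b)).
Proof.
  intros [H1 H2] [H3 H4]; split.
  - apply Good_ext with (fun a b => Re (g a b) - Re (h a b)). intros; csimp; auto. apply Good_minus; auto.
  - apply Good_ext with (fun a b => Im (g a b) - Im (h a b)). intros; csimp; auto. apply Good_minus; auto.
Qed.
Lemma GoodC_mult g h : GoodC g -> GoodC h -> GoodC (fun a b => Cmult (g a b) (h a b)).
Proof.
  intros [H1 H2] [H3 H4]; split.
  - apply Good_ext with (fun a b => Re (g a b) * Re (h a b) - Im (g a b) * Im (h a b)).
    intros; csimp; auto. apply Good_minus; apply Good_mult; auto.
  - apply Good_ext with (fun a b => Re (g a b) * Im (h a b) + Im (g a b) * Re (h a b)).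
    intros; csimp; auto. apply Good_plus; apply Good_mult; auto.
Qed.
Lemma GoodC_const (c : C) : GoodC (fun _ _ => c).
Proof. split; apply Good_const. Qed.
Lemma GoodC_R G : Good G -> GoodC (fun a b => RtoC (G a b)).
Proof. intros H; split; [exact H | apply Good_ext with (fun _ _ => 0); [intros; reflexivity | apply Good_const]]. Qed.
Lemma GoodC_shift x g : GoodC g -> GoodC (fun a b => g (x - a) b).
Proof. intros [H1 H2]; split; [apply (Good_shift x (fun u b => Re (g u b))) | apply (Good_shift x (fun u b => Im (g u b)))]; auto. Qed.
Lemma GoodC_pt : GoodC pt.
Proof. split; [apply Good_id1 | apply Good_id2]. Qed.
Lemma GoodC_conj g : GoodC g -> GoodC (fun a b => Cconj (g a b)).
Proof.
  intros [H1 H2]; split.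
  - apply Good_ext with (fun a b => Re (g a b)). intros; csimp; auto. auto.
  - apply Good_ext with (fun a b => - Im (g a b)). intros; csimp; auto. apply Good_opp; auto.
Qed.


Open Scope R_scope.

Lemma cont2d_1 G a b : continuity_2d_pt G a b -> continuity_pt (fun a => G a b) a.
Proof.
  intros H. apply continuity_pt_locally. intros eps.
  destruct (H eps) as [d Hd]. exists d. intros y Hy. apply Hd.
  exact Hy. rewrite Rminus_eq_0, Rabs_R0; apply cond_pos.
Qed.
Lemma cont2d_2 G a b : continuity_2d_pt G a b -> continuity_pt (fun b => G a b) b.
Proof.
  intros H. apply continuity_pt_locally. intros eps.
  destruct (H eps) as [d Hd]. exists d. intros y Hy. apply Hd.
  rewrite Rminus_eq_0, Rabs_R0; apply cond_pos. exact Hy.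
Qed.
Lemma Good_cont_a G a b : Good G -> 0 < b -> continuous (fun a => G a b) a.
Proof. intros H Hb; apply continuity_pt_filterlim, cont2d_1, H, Hb. Qed.
Lemma Good_cont_b G a b : Good G -> 0 < b -> continuous (fun b => G a b) b.
Proof. intros H Hb; apply continuity_pt_filterlim, cont2d_2, H, Hb. Qed.

Lemma Good_exRInt G A0 A1 b : Good G -> 0 < b -> ex_RInt (fun a => G a b) A0 A1.
Proof. intros H Hb; apply (@ex_RInt_continuous R_CompleteNormedModule); intros; apply Good_cont_a; auto. Qed.

Lemma RInt_minus_R (f g : R -> R) a b : ex_RInt f a b -> ex_RInt g a b ->
  RInt (fun t => f t - g t) a b = RInt f a b - RInt g a b.
Proof. intros; apply (RInt_minus f g); auto. Qed.
Lemma RInt_plus_R (f g : R -> R) a b : ex_RInt f a b -> ex_RInt g a b ->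
  RInt (fun t => f t + g t) a b = RInt f a b + RInt g a b.
Proof. intros; apply (RInt_plus f g); auto. Qed.
Lemma RInt_scal_R (f : R -> R) a b c : ex_RInt f a b ->
  RInt (fun t => c * f t) a b = c * RInt f a b.
Proof. intros; apply (RInt_scal f); auto. Qed.
Lemma RInt_zero_R a b : RInt (fun _ => 0) a b = 0.
Proof. rewrite RInt_const. unfold scal; simpl; unfold mult; simpl; ring. Qed.

Lemma max_cont_ab (g : R -> R) A0 A1 : A0 <= A1 -> (forall a, A0 <= a <= A1 -> continuity_pt g a) ->
  exists M, 0 < M /\ forall a, A0 <= a <= A1 -> Rabs (g a) <= M.
Proof.
  intros HA Hc.
  destruct (continuity_ab_maj (fun a => Rabs (g a)) A0 A1 HA) as [m [Hm _]].
  { intros c Hc'. apply continuity_pt_filterlim. apply continuous_Rabs_comp.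
    apply continuity_pt_filterlim, Hc, Hc'. }
  exists (Rabs (g m) + 1); split. generalize (Rabs_pos (g m)); lra.
  intros a Ha; generalize (Hm a Ha); lra.
Qed.

Lemma PC2 (P Q : R -> R -> R) (A0 A1 x0 b0 : R) : 0 < b0 -> A0 <= A1 -> Good P -> Good Q ->
  continuity_2d_pt (fun x b => RInt (fun a => P (x - a) b * Q a b) A0 A1) x0 b0.
Proof.
  intros Hb0 HA HP HQ eps.
  destruct (max_cont_ab (fun a => P (x0 - a) b0) A0 A1 HA) as [N [HN HNb]].
  { intros a Ha; apply (cont2d_1 (fun a b => P (x0 - a) b) a b0), (Good_shift x0 P HP); auto. }
  destruct (max_cont_ab (fun a => Q a b0) A0 A1 HA) as [M0 [HM0 HMb]].
  { intros a Ha; apply (cont2d_1 Q a b0), HQ; auto. }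
  set (M := M0 + 1).
  assert (He : 0 < eps / (2 * (A1 - A0 + 1) * (M + N))).
  { apply Rdiv_lt_0_compat. apply cond_pos. unfold M. apply Rmult_lt_0_compat; lra. }
  set (e := eps / (2 * (A1 - A0 + 1) * (M + N))) in *.
  destruct (uniform_continuity_2d P (x0 - A1 - 1) (x0 - A0 + 1) (b0 / 2) (3 * b0 / 2))
    with (eps := mkposreal e He) as [dP HdP].
  { intros; apply HP; lra. }
  assert (He1 : 0 < Rmin e 1). { apply Rmin_pos; lra. }
  destruct (uniform_continuity_2d Q A0 A1 (b0 / 2) (3 * b0 / 2))
    with (eps := mkposreal (Rmin e 1) He1) as [dQ HdQ].
  { intros; apply HQ; lra. }
  assert (Hd : 0 < Rmin (Rmin dP dQ) (Rmin (b0 / 2) 1)).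
  { apply Rmin_pos; [apply Rmin_pos; apply cond_pos | apply Rmin_pos; lra]. }
  exists (mkposreal _ Hd). simpl. intros x b Hx Hb.
  assert (Hx1 : Rabs (x - x0) < dP). { eapply Rlt_le_trans; [exact Hx|]. 
    eapply Rle_trans; [apply Rmin_l | apply Rmin_l]. }
  assert (Hb1 : Rabs (b - b0) < dP). { eapply Rlt_le_trans; [exact Hb|].
    eapply Rle_trans; [apply Rmin_l | apply Rmin_l]. }
  assert (Hb2 : Rabs (b - b0) < dQ). { eapply Rlt_le_trans; [exact Hb|].
    eapply Rle_trans; [apply Rmin_l | apply Rmin_r]. }
  assert (Hb3 : Rabs (b - b0) < b0 / 2). { eapply Rlt_le_trans; [exact Hb|].
    eapply Rle_trans; [apply Rmin_r | apply Rmin_l]. }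
  assert (Hx4 : Rabs (x - x0) < 1). { eapply Rlt_le_trans; [exact Hx|].
    eapply Rle_trans; [apply Rmin_r | apply Rmin_r]. }
  apply Rabs_def2 in Hx4.
  apply Rabs_def2 in Hb3. 
  assert (Hbpos : 0 < b) by lra.
  rewrite <- RInt_minus_R.
  2: { apply (Good_exRInt (fun a b => P (x - a) b * Q a b)); auto.
       apply Good_mult; [apply Good_shift|]; auto. }
  2: { apply (Good_exRInt (fun a b => P (x0 - a) b * Q a b)); auto.
       apply Good_mult; [apply Good_shift|]; auto. }
  eapply Rle_lt_trans.
  apply abs_RInt_le_const with (M := e * M + N * e). exact HA.
  { apply (ex_RInt_minus (fun t => P (x - t) b * Q t b) (fun t => P (x0 - t) b0 * Q t b0)).
    apply (Good_exRInt (fun a b => P (x - a) b * Q a b)); auto.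
    apply Good_mult; [apply Good_shift|]; auto.
    apply (Good_exRInt (fun a b => P (x0 - a) b * Q a b)); auto.
    apply Good_mult; [apply Good_shift|]; auto. }
  { intros t Ht.
    assert (E1 : Rabs (P (x - t) b - P (x0 - t) b0) < e).
    { apply (HdP (x0 - t) b0 (x - t) b); try lra.
      replace (x - t - (x0 - t)) with (x - x0) by ring. exact Hx1. }
    assert (E2 : Rabs (Q t b - Q t b0) < Rmin e 1).
    { apply (HdQ t b0 t b); try lra. rewrite Rminus_eq_0, Rabs_R0; apply cond_pos. }
    assert (E3 : Rabs (Q t b) <= M).
    { unfold M. generalize (HMb t Ht). intro.
      generalize (Rmin_r e 1). intro.
      replace (Q t b) with (Q t b0 + (Q t b - Q t b0)) by ring.
      eapply Rle_trans; [apply Rabs_triang|]. lra. }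
    generalize (Rmin_l e 1). intro.
    replace (P (x - t) b * Q t b - P (x0 - t) b0 * Q t b0) with
      ((P (x - t) b - P (x0 - t) b0) * Q t b + P (x0 - t) b0 * (Q t b - Q t b0)) by ring.
    eapply Rle_trans; [apply Rabs_triang|]. rewrite !Rabs_mult.
    apply Rplus_le_compat.
    - apply Rmult_le_compat; try apply Rabs_pos; lra.
    - apply Rmult_le_compat; try apply Rabs_pos. apply HNb, Ht. lra. }
  unfold e. 
  replace ((A1 - A0) * (eps / (2 * (A1 - A0 + 1) * (M + N)) * M + N * (eps / (2 * (A1 - A0 + 1) * (M + N)))))
    with (eps * ((A1 - A0) / (2 * (A1 - A0 + 1)))) by (field; unfold M; lra).
  generalize (cond_pos eps); intro.
  assert ((A1 - A0) / (2 * (A1 - A0 + 1)) < 1).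
  { apply Rmult_lt_reg_r with (2 * (A1 - A0 + 1)). lra.
    unfold Rdiv; rewrite Rmult_assoc, Rinv_l; lra. }
  nra.
Qed.


Open Scope R_scope.

Lemma ball_R (x e y : R) : ball x e y -> Rabs (y - x) < e. Proof. intros H; exact H. Qed.

Definition Rect (A0 A1 B0 B1 : R) := A0 <= A1 /\ 0 < B0 /\ B0 <= B1.
Definition DI (A0 A1 B0 B1 : R) (G : R -> R -> R) : R :=
  RInt (fun b => RInt (fun a => G a b) A0 A1) B0 B1.
Definition DIC (A0 A1 B0 B1 : R) (g : R -> R -> C) : C :=
  (DI A0 A1 B0 B1 (fun a b => Re (g a b)), DI A0 A1 B0 B1 (fun a b => Im (g a b))).

Lemma PC1 G A0 A1 b : A0 <= A1 -> 0 < b -> Good G ->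
  continuity_pt (fun b => RInt (fun a => G a b) A0 A1) b.
Proof.
  intros HA Hb HG.
  apply (cont2d_2 (fun x b => RInt (fun a => G a b) A0 A1) 0 b).
  apply continuity_2d_pt_ext with (fun x b => RInt (fun a => (fun _ _ => 1) (x - a) b * G a b) A0 A1).
  { intros; apply RInt_ext; intros; apply Rmult_1_l. }
  apply (PC2 (fun _ _ => 1) G); auto. apply Good_const.
Qed.

Lemma DI_ex_outer G A0 A1 B0 B1 : Rect A0 A1 B0 B1 -> Good G ->
  ex_RInt (fun b => RInt (fun a => G a b) A0 A1) B0 B1.
Proof.
  intros [HA [HB0 HB]] HG. apply (@ex_RInt_continuous R_CompleteNormedModule).
  intros z Hz. rewrite Rmin_left in Hz by lra. apply continuity_pt_filterlim, PC1; auto; lra.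
Qed.

Section DIlin.
Variables A0 A1 B0 B1 : R.
Hypothesis HR : Rect A0 A1 B0 B1.

Lemma DI_ext G H : (forall a b, 0 < b -> G a b = H a b) -> DI A0 A1 B0 B1 G = DI A0 A1 B0 B1 H.
Proof.
  intros E; unfold DI. apply RInt_ext. intros b Hb. destruct HR as [HA [HB0 HB]].
  rewrite Rmin_left in Hb by lra. apply RInt_ext. intros; apply E; lra.
Qed.

Lemma DI_plus G H : Good G -> Good H ->
  DI A0 A1 B0 B1 (fun a b => G a b + H a b) = DI A0 A1 B0 B1 G + DI A0 A1 B0 B1 H.
Proof.
  intros HG HH. unfold DI. destruct HR as [HA [HB0 HB]].
  rewrite <- RInt_plus_R by (apply DI_ex_outer; auto).
  apply RInt_ext. intros b Hb. rewrite Rmin_left in Hb by lra.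
  apply RInt_plus_R; apply Good_exRInt; auto; lra.
Qed.
Lemma DI_minus G H : Good G -> Good H ->
  DI A0 A1 B0 B1 (fun a b => G a b - H a b) = DI A0 A1 B0 B1 G - DI A0 A1 B0 B1 H.
Proof.
  intros HG HH. unfold DI. destruct HR as [HA [HB0 HB]].
  rewrite <- RInt_minus_R by (apply DI_ex_outer; auto).
  apply RInt_ext. intros b Hb. rewrite Rmin_left in Hb by lra.
  apply RInt_minus_R; apply Good_exRInt; auto; lra.
Qed.
Lemma DI_scal c G : Good G ->
  DI A0 A1 B0 B1 (fun a b => c * G a b) = c * DI A0 A1 B0 B1 G.
Proof.
  intros HG. unfold DI. destruct HR as [HA [HB0 HB]].
  rewrite <- RInt_scal_R by (apply DI_ex_outer; auto).
  apply RInt_ext. intros b Hb. rewrite Rmin_left in Hb by lra.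
  apply RInt_scal_R; apply Good_exRInt; auto; lra.
Qed.

Lemma Re_DIC g : Re (DIC A0 A1 B0 B1 g) = DI A0 A1 B0 B1 (fun a b => Re (g a b)).
Proof. reflexivity. Qed.
Lemma Im_DIC g : Im (DIC A0 A1 B0 B1 g) = DI A0 A1 B0 B1 (fun a b => Im (g a b)).
Proof. reflexivity. Qed.

Lemma DIC_ext g h : (forall a b, 0 < b -> g a b = h a b) -> DIC A0 A1 B0 B1 g = DIC A0 A1 B0 B1 h.
Proof.
  intros E; apply C_ext; rewrite !Re_DIC || rewrite !Im_DIC; apply DI_ext; intros; rewrite E; auto.
Qed.
Lemma DIC_plus g h : GoodC g -> GoodC h ->
  DIC A0 A1 B0 B1 (fun a b => Cplus (g a b) (h a b)) = Cplus (DIC A0 A1 B0 B1 g) (DIC A0 A1 B0 B1 h).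
Proof.
  intros [G1 G2] [H1 H2]; apply C_ext; csimp; rewrite ?Re_DIC, ?Im_DIC.
  - rewrite <- DI_plus by auto. apply DI_ext; intros; csimp; auto.
  - rewrite <- DI_plus by auto. apply DI_ext; intros; csimp; auto.
Qed.
Lemma DIC_minus g h : GoodC g -> GoodC h ->
  DIC A0 A1 B0 B1 (fun a b => Cminus (g a b) (h a b)) = Cminus (DIC A0 A1 B0 B1 g) (DIC A0 A1 B0 B1 h).
Proof.
  intros [G1 G2] [H1 H2]; apply C_ext; csimp; rewrite ?Re_DIC, ?Im_DIC.
  - rewrite <- DI_minus by auto. apply DI_ext; intros; csimp; auto.
  - rewrite <- DI_minus by auto. apply DI_ext; intros; csimp; auto.
Qed.
Lemma DIC_scal (c : C) g : GoodC g ->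
  DIC A0 A1 B0 B1 (fun a b => Cmult c (g a b)) = Cmult c (DIC A0 A1 B0 B1 g).
Proof.
  intros [G1 G2]; apply C_ext; csimp; rewrite ?Re_DIC, ?Im_DIC.
  - rewrite <- !DI_scal by auto. rewrite <- DI_minus by (apply Good_mult; auto; apply Good_const).
    apply DI_ext; intros; csimp; auto.
  - rewrite <- !DI_scal by auto. rewrite <- DI_plus by (apply Good_mult; auto; apply Good_const).
    apply DI_ext; intros; csimp; auto.
Qed.
End DIlin.


Open Scope R_scope.

Lemma cont_diff (D : R -> R -> R) y a t : continuity_2d_pt D (y - a) t ->
  continuity_2d_pt (fun u v => D (u - v) t) y a.
Proof.
  intros H. apply (continuity_1d_2d_pt_comp (fun w => D w t) (fun u v => u - v)).
  apply (cont2d_1 D (y - a) t H).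
  apply continuity_2d_pt_minus; [apply continuity_2d_pt_id1 | apply continuity_2d_pt_id2].
Qed.
Lemma cont_snd (Q : R -> R -> R) y a t : continuity_2d_pt Q a t ->
  continuity_2d_pt (fun u v => Q v t) y a.
Proof.
  intros H. apply (continuity_1d_2d_pt_comp (fun w => Q w t) (fun u v => v)).
  apply (cont2d_1 Q a t H). apply continuity_2d_pt_id2.
Qed.
Lemma cont_swap (G : R -> R -> R) a b : continuity_2d_pt G a b ->
  continuity_2d_pt (fun u v => G v u) b a.
Proof.
  intros H eps. destruct (H eps) as [d Hd]. exists d. intros u v Hu Hv. apply Hd; auto.
Qed.

Section DDI.
Variables (P dP Q : R -> R -> R) (A0 A1 B0 B1 : R).
Hypothesis HR : Rect A0 A1 B0 B1.
Hypothesis HPd : forall u b, 0 < b -> is_derive (fun u => P u b) u (dP u b).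
Hypothesis HP : Good P.
Hypothesis HdP : Good dP.
Hypothesis HQ : Good Q.

Lemma Dshift y a t : 0 < t -> is_derive (fun u => P (u - a) t * Q a t) y (dP (y - a) t * Q a t).
Proof.
  intros Ht. apply (is_derive_eq _ _ (dP (y - a) t * Q a t + P (y - a) t * 0)); [| ring].
  apply (isd_mult (fun u => P (u - a) t) (fun _ => Q a t)); [| apply isd_const].
  apply (is_derive_eq _ _ (1 * dP (y - a) t)); [| ring].
  apply (isd_comp (fun w => P w t) (fun u => u - a)). apply HPd, Ht.
  apply (is_derive_eq _ _ (1 - 0)); [| ring]. apply isd_minus; [apply isd_id | apply isd_const].
Qed.

Lemma ID y t : 0 < t -> is_derive (fun y => RInt (fun a => P (y - a) t * Q a t) A0 A1) y
  (RInt (fun a => dP (y - a) t * Q a t) A0 A1).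
Proof.
  intros Ht. destruct HR as [HA [HB0 HB]].
  assert (E : RInt (fun a => dP (y - a) t * Q a t) A0 A1 =
              RInt (fun a => Derive (fun u => P (u - a) t * Q a t) y) A0 A1).
  { apply RInt_ext; intros; symmetry; apply is_derive_unique, Dshift, Ht. }
  rewrite E.
  apply (is_derive_RInt_param (fun u a => P (u - a) t * Q a t)).
  - apply filter_forall. intros y0 a _. eexists. apply Dshift, Ht.
  - intros a _. apply continuity_2d_pt_ext with (fun u v => dP (u - v) t * Q v t).
    { intros u v; symmetry; apply is_derive_unique, Dshift, Ht. }
    apply continuity_2d_pt_mult.
    apply (cont_diff dP y a t), HdP, Ht.
    apply (cont_snd Q y a t), HQ, Ht.
  - apply filter_forall. intros y0.
    apply (Good_exRInt (fun a b => P (y0 - a) b * Q a b)); auto.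
    apply Good_mult; [apply (Good_shift y0 P HP) | exact HQ].
Qed.

Lemma DDI x : is_derive (fun x => DI A0 A1 B0 B1 (fun a b => P (x - a) b * Q a b)) x
  (DI A0 A1 B0 B1 (fun a b => dP (x - a) b * Q a b)).
Proof.
  destruct HR as [HA [HB0 HB]]. unfold DI.
  assert (E : RInt (fun b => RInt (fun a => dP (x - a) b * Q a b) A0 A1) B0 B1 =
    RInt (fun b => Derive (fun u => RInt (fun a => P (u - a) b * Q a b) A0 A1) x) B0 B1).
  { apply RInt_ext; intros b Hb. rewrite Rmin_left in Hb by lra.
    symmetry; apply is_derive_unique, ID; lra. }
  rewrite E.
  apply (is_derive_RInt_param (fun u b => RInt (fun a => P (u - a) b * Q a b) A0 A1)).
  - apply filter_forall. intros y0 b Hb. rewrite Rmin_left in Hb by lra.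
    eexists. apply ID; lra.
  - intros b Hb. rewrite Rmin_left in Hb by lra.
    apply continuity_2d_pt_ext_loc with (fun u v => RInt (fun a => dP (u - a) v * Q a v) A0 A1).
    { exists (mkposreal _ (half_pos b ltac:(lra))). simpl. intros u v _ Hv.
      symmetry; apply is_derive_unique, ID. eapply near_pos; [| exact Hv]; lra. }
    apply PC2; auto; lra.
  - apply filter_forall. intros y0.
    apply (@ex_RInt_continuous R_CompleteNormedModule). intros z Hz.
    rewrite Rmin_left in Hz by lra.
    apply continuity_pt_filterlim.
    apply (cont2d_2 (fun x b => RInt (fun a => P (x - a) b * Q a b) A0 A1) y0 z).
    apply PC2; auto; lra.
Qed.
End DDI.

Section IBP.
Variables (A0 A1 B0 B1 : R).
Hypothesis HR : Rect A0 A1 B0 B1.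

Lemma IBPa (U dU : R -> R -> R) :
  (forall a b, 0 < b -> is_derive (fun a => U a b) a (dU a b)) -> Good dU ->
  (forall b, 0 < b -> U A0 b = 0 /\ U A1 b = 0) -> DI A0 A1 B0 B1 dU = 0.
Proof.
  intros Hd HdU Hbd. destruct HR as [HA [HB0 HB]]. unfold DI.
  rewrite <- (RInt_zero_R B0 B1). apply RInt_ext. intros b Hb. rewrite Rmin_left in Hb by lra.
  apply is_RInt_unique.
  destruct (Hbd b ltac:(lra)) as [E0 E1].
  replace 0 with (minus (U A1 b) (U A0 b)) by (rewrite E0, E1; unfold minus, plus, opp; simpl; ring).
  apply (is_RInt_derive (fun a => U a b) (fun a => dU a b)).
  - intros; apply Hd; lra.
  - intros; apply Good_cont_a; auto; lra.
Qed.

Lemma IBPb (U dU : R -> R -> R) :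
  (forall a b, 0 < b -> is_derive (fun b => U a b) b (dU a b)) -> Good U -> Good dU ->
  (forall a, U a B0 = 0 /\ U a B1 = 0) -> DI A0 A1 B0 B1 dU = 0.
Proof.
  intros Hd HU HdU Hbd. destruct HR as [HA [HB0 HB]]. unfold DI.
  assert (HD : forall b, 0 < b -> is_derive (fun b => RInt (fun a => U a b) A0 A1) b
                                   (RInt (fun a => dU a b) A0 A1)).
  { intros b Hb.
    assert (E : RInt (fun a => dU a b) A0 A1 = RInt (fun a => Derive (fun u => U a u) b) A0 A1).
    { apply RInt_ext; intros; symmetry; apply is_derive_unique, Hd, Hb. }
    rewrite E.
    apply (is_derive_RInt_param (fun u a => U a u)).
    - exists (mkposreal _ (half_pos b Hb)). intros y0 Hy0 a _. apply ball_R in Hy0. simpl in Hy0.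
      eexists. apply Hd. eapply near_pos; [exact Hb| exact Hy0].
    - intros a _. apply continuity_2d_pt_ext_loc with (fun u v => dU v u).
      { exists (mkposreal _ (half_pos b Hb)). simpl. intros u v Hu _.
        symmetry; apply is_derive_unique, Hd. eapply near_pos; [exact Hb| exact Hu]. }
      apply (cont_swap dU a b), HdU, Hb.
    - exists (mkposreal _ (half_pos b Hb)). intros y0 Hy0. apply ball_R in Hy0. simpl in Hy0.
      apply Good_exRInt; auto. eapply near_pos; [exact Hb| exact Hy0]. }
  apply is_RInt_unique.
  replace 0 with (minus (RInt (fun a => U a B1) A0 A1) (RInt (fun a => U a B0) A0 A1)).
  2: { rewrite (RInt_ext (fun a => U a B1) (fun _ => 0)) by (intros; apply Hbd).
       rewrite (RInt_ext (fun a => U a B0) (fun _ => 0)) by (intros; apply Hbd).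
       rewrite RInt_zero_R. unfold minus, plus, opp; simpl; ring. }
  apply (is_RInt_derive (fun b => RInt (fun a => U a b) A0 A1) (fun b => RInt (fun a => dU a b) A0 A1)).
  - intros b Hb. rewrite Rmin_left in Hb by lra. apply HD; lra.
  - intros b Hb. rewrite Rmin_left in Hb by lra. apply continuity_pt_filterlim, PC1; auto; lra.
Qed.

Lemma IBPaC (U dU : R -> R -> C) :
  (forall a b, 0 < b -> CD (fun a => U a b) a (dU a b)) -> GoodC dU ->
  (forall b, 0 < b -> U A0 b = 0%C /\ U A1 b = 0%C) -> DIC A0 A1 B0 B1 dU = 0%C.
Proof.
  intros Hd [G1 G2] Hbd. apply C_ext; rewrite ?Re_DIC, ?Im_DIC.
  - apply (IBPa (fun a b => Re (U a b))); auto.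
    intros a b Hb; apply (Hd a b Hb).
    intros b Hb; destruct (Hbd b Hb) as [E0 E1]; rewrite E0, E1; split; reflexivity.
  - apply (IBPa (fun a b => Im (U a b))); auto.
    intros a b Hb; apply (Hd a b Hb).
    intros b Hb; destruct (Hbd b Hb) as [E0 E1]; rewrite E0, E1; split; reflexivity.
Qed.

Lemma IBPbC (U dU : R -> R -> C) :
  (forall a b, 0 < b -> CD (fun b => U a b) b (dU a b)) -> GoodC U -> GoodC dU ->
  (forall a, U a B0 = 0%C /\ U a B1 = 0%C) -> DIC A0 A1 B0 B1 dU = 0%C.
Proof.
  intros Hd [G1 G2] [G3 G4] Hbd. apply C_ext; rewrite ?Re_DIC, ?Im_DIC.
  - apply (IBPb (fun a b => Re (U a b))); auto.
    intros a b Hb; apply (Hd a b Hb).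
    intros a; destruct (Hbd a) as [E0 E1]; rewrite E0, E1; split; reflexivity.
  - apply (IBPb (fun a b => Im (U a b))); auto.
    intros a b Hb; apply (Hd a b Hb).
    intros a; destruct (Hbd a) as [E0 E1]; rewrite E0, E1; split; reflexivity.
Qed.
End IBP.


Open Scope R_scope.

Lemma pair_is_RInt (f : R -> C) a b : ex_RInt (fun t => Re (f t)) a b -> ex_RInt (fun t => Im (f t)) a b ->
  is_RInt f a b (RInt (fun t => Re (f t)) a b, RInt (fun t => Im (f t)) a b).
Proof.
  intros H1 H2.
  exact (@is_RInt_fct_extend_pair R_NormedModule R_NormedModule f a b _ _ (RInt_correct _ _ _ H1) (RInt_correct _ _ _ H2)).
Qed.

Lemma is_RInt_zero_C (f : R -> C) u v : (forall a, Rmin u v < a < Rmax u v -> f a = 0%C) ->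
  is_RInt f u v (@zero C_R_NormedModule).
Proof.
  intros H. apply is_RInt_ext with (fun _ => @zero C_R_NormedModule).
  { intros; symmetry; apply H; auto. }
  assert (H0 := is_RInt_const (V := C_R_NormedModule) u v zero).
  match type of H0 with is_RInt _ _ _ ?L => replace L with (@zero C_R_NormedModule) in H0 end.
  exact H0. symmetry. apply C_ext; unfold scal, zero; simpl; unfold prod_scal, prod_zero; simpl; unfold scal, zero; simpl; unfold mult; simpl; ring.
Qed.

Lemma is_RInt_zext (f : R -> C) u A0 A1 v l : u <= A0 -> A0 <= A1 -> A1 <= v ->
  (forall a, u < a < A0 -> f a = 0%C) -> (forall a, A1 < a < v -> f a = 0%C) ->
  is_RInt f A0 A1 l -> is_RInt f u v l.
Proof.
  intros H1 H2 H3 Z1 Z2 Hl.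
  rewrite <- (plus_zero_r l). rewrite <- (plus_zero_l l) at 1.
  apply is_RInt_Chasles with A1; [apply is_RInt_Chasles with A0 |]; auto.
  - apply is_RInt_zero_C. intros a Ha; rewrite Rmin_left, Rmax_right in Ha by lra; apply Z1; lra.
  - apply is_RInt_zero_C. intros a Ha; rewrite Rmin_left, Rmax_right in Ha by lra; apply Z2; lra.
Qed.

Lemma Cmult_0_l (z : C) : Cmult 0%C z = 0%C.
Proof. apply C_ext; csimp; ring. Qed.

Definition rho (b : R) : R := / (4 * b ^ 2).
Lemma Good_rho : Good (fun _ b => rho b).
Proof.
  unfold rho. apply Good_inv.
  apply Good_ext with (fun _ b => 4 * (b * b)). intros; ring.
  apply Good_mult; [apply Good_const | apply Good_mult; apply Good_id2].
  intros a b Hb. apply Rgt_not_eq. apply Rmult_lt_0_compat. lra. apply pow_lt; lra.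
Qed.

Definition Vn (a0 a1 b0 b1 : R) (h : R -> R -> C) :=
  forall a b, 0 < b -> (a < a0 \/ a1 < a \/ b < b0 \/ b1 < b) -> h a b = 0%C.

Lemma IL (g h : R -> R -> C) a0 a1 b0 b1 : a0 <= a1 -> 0 < b0 -> b0 <= b1 ->
  (forall a b, 0 < b -> g a b = h a b) -> GoodC h -> Vn a0 a1 b0 b1 h ->
  int_Lam g = DIC (a0 - 1) (a1 + 1) (b0 / 2) (b1 + 1) (fun a b => Cmult (h a b) (RtoC (rho b))).
Proof.
  intros Ha Hb0 Hb Egh HG HV.
  set (A0 := a0 - 1). set (A1 := a1 + 1). set (B0 := b0 / 2). set (B1 := b1 + 1).
  assert (HR : Rect A0 A1 B0 B1) by (unfold Rect, A0, A1, B0, B1; lra).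
  set (rh := fun a b => Cmult (h a b) (RtoC (rho b))).
  assert (Grh : GoodC rh).
  { apply GoodC_mult; [exact HG | apply GoodC_R, Good_rho]. }
  destruct Grh as [G1 G2].
  set (IC := fun b => (RInt (fun a => Re (rh a b)) A0 A1, RInt (fun a => Im (rh a b)) A0 A1) : C).
  assert (Hin : forall b, 0 < b ->
    is_RInt_gen (fun a => Cmult (g a b) (RtoC (/ (4 * b ^ 2)))) (Rbar_locally m_infty) (Rbar_locally p_infty) (IC b)).
  { intros b Hbp.
    assert (E : (fun a => Cmult (g a b) (RtoC (/ (4 * b ^ 2)))) = (fun a => rh a b)).
    { apply functional_extensionality; intros a; unfold rh, rho; rewrite Egh; auto. }
    rewrite E. intros P HP.
    apply Filter_prod with (fun u => u < A0) (fun v => A1 < v).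
    - exists A0; auto.
    - exists A1; auto.
    - intros u v Hu Hv. exists (IC b). split; [| apply locally_singleton, HP].
      simpl. apply is_RInt_zext with A0 A1; try (unfold A0, A1 in *; lra).
      + intros a Ha'. unfold rh. rewrite HV; [apply Cmult_0_l | lra |]. left; unfold A0 in Ha'; lra.
      + intros a Ha'. unfold rh. rewrite HV; [apply Cmult_0_l | lra |]. right; left; unfold A1 in Ha'; lra.
      + apply (pair_is_RInt (fun a => rh a b)).
        apply (Good_exRInt (fun a b => Re (rh a b))); [exact G1 | exact Hbp].
        apply (Good_exRInt (fun a b => Im (rh a b))); [exact G2 | exact Hbp]. }
  assert (Hin' : forall b, 0 < b ->
    @RInt_gen C_R_CompleteNormedModule (fun a => Cmult (g a b) (RtoC (/ (4 * b ^ 2)))) (Rbar_locally m_infty) (Rbar_locally p_infty) = IC b).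
  { intros b Hbp. apply is_RInt_gen_unique, Hin, Hbp. }
  unfold int_Lam.
  apply (@is_RInt_gen_unique C_R_CompleteNormedModule (at_right 0) (Rbar_locally p_infty)
     (Proper_StrongProper _ (at_right_proper_filter 0)) (Proper_StrongProper _ (Rbar_locally_filter p_infty))).
  intros P HP.
  apply Filter_prod with (fun u => 0 < u < B0) (fun v => B1 < v).
  - unfold at_right, within, locally. exists (mkposreal B0 ltac:(unfold B0; lra)). intros y Hy Hy0. apply ball_R in Hy. simpl in Hy.
    apply Rabs_def2 in Hy. lra.
  - exists B1; auto.
  - intros u v Hu Hv. eexists. split; [| apply locally_singleton, HP].
    simpl. pose proof HR as HR'. destruct HR' as [_ [_ HB]].
    apply is_RInt_ext with IC.
    { intros b Hb'. rewrite Rmin_left, Rmax_right in Hb' by lra. symmetry; apply Hin'; lra. }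
    apply is_RInt_zext with B0 B1; try lra.
    + intros b Hb'. unfold IC. apply C_ext;
        [change (RInt (fun a => Re (rh a b)) A0 A1 = 0) | change (RInt (fun a => Im (rh a b)) A0 A1 = 0)];
        (rewrite <- (RInt_zero_R A0 A1); apply RInt_ext; intros a _;
        match goal with |- ?L = _ => change (@eq R L 0) end; unfold rh; rewrite HV; [csimp; ring | lra | right; right; left; unfold B0 in Hb'; lra]).
    + intros b Hb'. unfold IC. apply C_ext;
        [change (RInt (fun a => Re (rh a b)) A0 A1 = 0) | change (RInt (fun a => Im (rh a b)) A0 A1 = 0)];
        (rewrite <- (RInt_zero_R A0 A1); apply RInt_ext; intros a _;
        match goal with |- ?L = _ => change (@eq R L 0) end; unfold rh; rewrite HV; [csimp; ring | lra | right; right; right; unfold B1 in Hb'; lra]).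
    + apply (pair_is_RInt IC).
      apply (DI_ex_outer (fun a b => Re (rh a b))); [exact HR | exact G1].
      apply (DI_ex_outer (fun a b => Im (rh a b))); [exact HR | exact G2].
Qed.


Open Scope R_scope.

Lemma Derive_zero_loc (g : R -> R) x : locally x (fun t => g t = 0) -> Derive g x = 0.
Proof. intros H. rewrite (Derive_ext_loc g (fun _ => 0) x H). apply Derive_const. Qed.

Lemma DerivC_zero (g : R -> C) x : locally x (fun t => g t = 0%C) -> DerivC g x = 0%C.
Proof.
  intros H. unfold DerivC.
  rewrite (Derive_zero_loc (fun y => Re (g y)) x), (Derive_zero_loc (fun y => Im (g y)) x); [reflexivity| |];
  (eapply filter_imp; [| exact H]); intros t Ht; rewrite Ht; reflexivity.
Qed.

Lemma loc_lt x c : x < c -> locally x (fun t => t < c).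
Proof.
  intros H. exists (mkposreal (c - x) ltac:(lra)). intros t Ht; apply ball_R in Ht; simpl in Ht.
  apply Rabs_def2 in Ht; lra.
Qed.
Lemma loc_gt x c : c < x -> locally x (fun t => c < t).
Proof.
  intros H. exists (mkposreal (x - c) ltac:(lra)). intros t Ht; apply ball_R in Ht; simpl in Ht.
  apply Rabs_def2 in Ht; lra.
Qed.

Section FF.
Variables (f : R -> R -> C) (a0 a1 b0 b1 : R).
Hypothesis HVf : Vn a0 a1 b0 b1 f.

Lemma Vn_da : Vn a0 a1 b0 b1 (d_a f).
Proof.
  intros a b Hb Hout. unfold d_a. apply DerivC_zero.
  destruct Hout as [H|[H|[H|H]]].
  - eapply filter_imp; [| apply (loc_lt a a0 H)]. intros t Ht; apply HVf; [exact Hb| left; exact Ht].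
  - eapply filter_imp; [| apply (loc_gt a a1 H)]. intros t Ht; apply HVf; [exact Hb| right; left; exact Ht].
  - apply filter_forall; intros t; apply HVf; [exact Hb | right; right; left; exact H].
  - apply filter_forall; intros t; apply HVf; [exact Hb | right; right; right; exact H].
Qed.

Lemma Vn_db : Vn a0 a1 b0 b1 (d_b f).
Proof.
  intros a b Hb Hout. unfold d_b. apply DerivC_zero.
  destruct Hout as [H|[H|[H|H]]].
  - eapply filter_imp; [| apply (loc_gt b 0 Hb)]. intros t Ht; apply HVf; [exact Ht| left; exact H].
  - eapply filter_imp; [| apply (loc_gt b 0 Hb)]. intros t Ht; apply HVf; [exact Ht| right; left; exact H].
  - eapply filter_imp; [| apply (filter_and _ _ (loc_gt b 0 Hb) (loc_lt b b0 H))].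
    intros t [Ht1 Ht2]; apply HVf; [exact Ht1| right; right; left; exact Ht2].
  - eapply filter_imp; [| apply (filter_and _ _ (loc_gt b 0 Hb) (loc_gt b b1 H))].
    intros t [Ht1 Ht2]; apply HVf; [exact Ht1| right; right; right; exact Ht2].
Qed.
End FF.

Lemma DerivC_CD g y l : CD g y l -> DerivC g y = l.
Proof.
  intros [H1 H2]. unfold DerivC. apply C_ext; [exact (is_derive_unique _ _ _ H1) | exact (is_derive_unique _ _ _ H2)].
Qed.
Lemma ex_DerivC_CD g y l : CD g y l -> ex_DerivC g y.
Proof. intros [H1 H2]; split; eexists; eassumption. Qed.

Section JK.
Variables (f : R -> R -> C) (A0 A1 B0 B1 : R).
Hypothesis HR : Rect A0 A1 B0 B1.
Hypothesis HGf : GoodC f.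

Definition JK (k : R -> R -> C) (y : R) : C :=
  DIC A0 A1 B0 B1 (fun a b => Cmult (Cmult (k (y - a) b) (f a b)) (RtoC (rho b))).

Lemma Good_kf (G F : R -> R -> R) y : Good G -> Good F -> Good (fun a b => G (y - a) b * (F a b * rho b)).
Proof.
  intros HG HF. apply Good_mult. apply (Good_shift y G HG).
  apply Good_mult; [exact HF | apply Good_rho].
Qed.

Lemma JK_re k y : GoodC k -> Re (JK k y) =
  DI A0 A1 B0 B1 (fun a b => Re (k (y - a) b) * (Re (f a b) * rho b)) -
  DI A0 A1 B0 B1 (fun a b => Im (k (y - a) b) * (Im (f a b) * rho b)).
Proof.
  intros [K1 K2]. destruct HGf as [F1 F2]. unfold JK. rewrite Re_DIC.
  rewrite <- (DI_minus A0 A1 B0 B1 HR _ _ (Good_kf (fun u b => Re (k u b)) (fun a b => Re (f a b)) y K1 F1)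
    (Good_kf (fun u b => Im (k u b)) (fun a b => Im (f a b)) y K2 F2)).
  apply DI_ext; [exact HR|]. intros; csimp; ring.
Qed.
Lemma JK_im k y : GoodC k -> Im (JK k y) =
  DI A0 A1 B0 B1 (fun a b => Re (k (y - a) b) * (Im (f a b) * rho b)) +
  DI A0 A1 B0 B1 (fun a b => Im (k (y - a) b) * (Re (f a b) * rho b)).
Proof.
  intros [K1 K2]. destruct HGf as [F1 F2]. unfold JK. rewrite Im_DIC.
  rewrite <- (DI_plus A0 A1 B0 B1 HR _ _ (Good_kf (fun u b => Re (k u b)) (fun a b => Im (f a b)) y K1 F2)
    (Good_kf (fun u b => Im (k u b)) (fun a b => Re (f a b)) y K2 F1)).
  apply DI_ext; [exact HR|]. intros; csimp; ring.
Qed.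

Lemma JK_CD k k' : (forall u b, 0 < b -> CD (fun u => k u b) u (k' u b)) -> GoodC k -> GoodC k' ->
  forall y, CD (JK k) y (JK k' y).
Proof.
  intros Hd Gk Gk' y. pose proof Gk as [K1 K2]. pose proof Gk' as [K3 K4]. pose proof HGf as [F1 F2].
  split.
  - apply (is_derive_ext (fun y => DI A0 A1 B0 B1 (fun a b => Re (k (y - a) b) * (Re (f a b) * rho b)) -
                         DI A0 A1 B0 B1 (fun a b => Im (k (y - a) b) * (Im (f a b) * rho b)))).
    { intros t; symmetry; apply JK_re, Gk. }
    rewrite JK_re by exact Gk'. apply isd_minus.
    + apply (DDI (fun u b => Re (k u b)) (fun u b => Re (k' u b)) (fun a b => Re (f a b) * rho b)); auto.
      intros u b Hb; apply (Hd u b Hb). apply Good_mult; [exact F1 | apply Good_rho].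
    + apply (DDI (fun u b => Im (k u b)) (fun u b => Im (k' u b)) (fun a b => Im (f a b) * rho b)); auto.
      intros u b Hb; apply (Hd u b Hb). apply Good_mult; [exact F2 | apply Good_rho].
  - apply (is_derive_ext (fun y => DI A0 A1 B0 B1 (fun a b => Re (k (y - a) b) * (Im (f a b) * rho b)) +
                         DI A0 A1 B0 B1 (fun a b => Im (k (y - a) b) * (Re (f a b) * rho b)))).
    { intros t; symmetry; apply JK_im, Gk. }
    rewrite JK_im by exact Gk'. apply isd_plus.
    + apply (DDI (fun u b => Re (k u b)) (fun u b => Re (k' u b)) (fun a b => Im (f a b) * rho b)); auto.
      intros u b Hb; apply (Hd u b Hb). apply Good_mult; [exact F2 | apply Good_rho].
    + apply (DDI (fun u b => Im (k u b)) (fun u b => Im (k' u b)) (fun a b => Re (f a b) * rho b)); auto.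
      intros u b Hb; apply (Hd u b Hb). apply Good_mult; [exact F1 | apply Good_rho].
Qed.

Lemma GoodC_kf k y : GoodC k -> GoodC (fun a b => Cmult (Cmult (k (y - a) b) (f a b)) (RtoC (rho b))).
Proof.
  intros Gk. apply GoodC_mult. apply GoodC_mult. apply (GoodC_shift y k Gk). exact HGf.
  apply GoodC_R, Good_rho.
Qed.

Lemma JK_scal (c : C) k y : GoodC k -> JK (fun u b => Cmult c (k u b)) y = Cmult c (JK k y).
Proof.
  intros Gk. unfold JK. rewrite <- (DIC_scal A0 A1 B0 B1 HR c _ (GoodC_kf k y Gk)).
  apply DIC_ext; [exact HR|]. intros; ring.
Qed.
Lemma JK_plus k1 k2 y : GoodC k1 -> GoodC k2 -> JK (fun u b => Cplus (k1 u b) (k2 u b)) y = Cplus (JK k1 y) (JK k2 y).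
Proof.
  intros G1 G2. unfold JK. rewrite <- (DIC_plus A0 A1 B0 B1 HR _ _ (GoodC_kf k1 y G1) (GoodC_kf k2 y G2)).
  apply DIC_ext; [exact HR|]. intros; ring.
Qed.
Lemma JK_minus k1 k2 y : GoodC k1 -> GoodC k2 -> JK (fun u b => Cminus (k1 u b) (k2 u b)) y = Cminus (JK k1 y) (JK k2 y).
Proof.
  intros G1 G2. unfold JK. rewrite <- (DIC_minus A0 A1 B0 B1 HR _ _ (GoodC_kf k1 y G1) (GoodC_kf k2 y G2)).
  apply DIC_ext; [exact HR|]. intros; ring.
Qed.
End JK.


Open Scope R_scope.

Lemma Good_div G H : Good G -> Good H -> (forall a b, 0 < b -> H a b <> 0) -> Good (fun a b => G a b / H a b).
Proof. intros HG HH Hn. unfold Rdiv. apply Good_mult; [exact HG | apply Good_inv; auto]. Qed.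

Ltac goodr := lazymatch goal with
 | |- Good (fun _ _ => ?c) => apply Good_const
 | |- Good (fun a b => Rmult (@?g a b) (@?h a b)) => apply (Good_mult g h); goodr
 | |- Good (fun a b => Rplus (@?g a b) (@?h a b)) => apply (Good_plus g h); goodr
 | |- Good (fun a b => Rminus (@?g a b) (@?h a b)) => apply (Good_minus g h); goodr
 | |- Good (fun a b => Ropp (@?g a b)) => apply (Good_opp g); goodr
 | |- Good (fun a b => Rdiv (@?g a b) (@?h a b)) => apply (Good_div g h); [goodr | goodr | let a := fresh in let b := fresh in let H := fresh in intros a b H; apply Rgt_not_eq; first [nra | (repeat apply Rmult_lt_0_compat; lra)]]
 | |- Good (fun a b => Rinv (@?g a b)) => apply (Good_inv g); [goodr | let a := fresh in let b := fresh in let H := fresh in intros a b H; apply Rgt_not_eq; first [nra | (repeat apply Rmult_lt_0_compat; lra)]]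
 | |- Good (fun a b => a) => apply Good_id1
 | |- Good (fun a b => b) => apply Good_id2
 | |- Good (fun a b => rho b) => apply Good_rho
 | |- _ => try assumption
end.

Definition Kt (tau : C) (x : R) (a b : R) : C := KK tau (x - a) b.
Definition Kta (tau : C) (x : R) (a b : R) : C :=
  Cmult (RtoC (- (2 * (x - a) / b))) (Cmult tau (KK (Cminus tau 1) (x - a) b)).
Definition Ktb (tau : C) (x : R) (a b : R) : C :=
  Cmult (RtoC (1 - (x - a) * (x - a) / (b * b))) (Cmult tau (KK (Cminus tau 1) (x - a) b)).
Definition drho (b : R) : R := - / (2 * (b * b * b)).

Lemma rho_der b : 0 < b -> is_derive rho b (drho b).
Proof. intros Hb. unfold rho, drho. auto_derive. nra. field. lra. Qed.

Lemma Kt_da tau x a b : 0 < b -> CD (fun a => Kt tau x a b) a (Kta tau x a b).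
Proof.
  intros Hb. unfold Kt, Kta.
  eapply CD_eq. apply (CD_comp (fun u => KK tau u b) (fun a => x - a) a
    (Cmult (RtoC (2 * (x - a) / b)) (Cmult tau (KK (Cminus tau 1) (x - a) b))) (-1)).
  apply KK_du, Hb.
  apply (is_derive_eq _ _ (0 - 1)); [apply isd_minus; [apply isd_const | apply isd_id] | ring].
  apply C_ext; csimp; field; lra.
Qed.
Lemma Kt_db tau x a b : 0 < b -> CD (fun b => Kt tau x a b) b (Ktb tau x a b).
Proof. intros Hb. unfold Kt, Ktb. apply KK_db, Hb. Qed.

Lemma GoodC_Kt tau x : GoodC (fun a b => Kt tau x a b).
Proof. unfold Kt. apply (GoodC_shift x (KK tau)), GoodC_KK. Qed.
Lemma GoodC_Kta tau x : GoodC (fun a b => Kta tau x a b).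
Proof.
  unfold Kta. apply (GoodC_mult (fun a b => RtoC (- (2 * (x - a) / b)))).
  apply GoodC_R. goodr.
  apply (GoodC_mult (fun a b => tau)). apply GoodC_const.
  apply (GoodC_shift x (KK (Cminus tau 1))), GoodC_KK.
Qed.
Lemma GoodC_Ktb tau x : GoodC (fun a b => Ktb tau x a b).
Proof.
  unfold Ktb. apply (GoodC_mult (fun a b => RtoC (1 - (x - a) * (x - a) / (b * b)))).
  apply GoodC_R. goodr.
  apply (GoodC_mult (fun a b => tau)). apply GoodC_const.
  apply (GoodC_shift x (KK (Cminus tau 1))), GoodC_KK.
Qed.
Lemma Good_drho : Good (fun _ b => drho b).
Proof. unfold drho. goodr. Qed.

Ltac goodc := lazymatch goal with
 | |- GoodC (fun _ _ => ?c) => apply GoodC_const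
 | |- GoodC (fun a b => Cmult (@?g a b) (@?h a b)) => apply (GoodC_mult g h); goodc
 | |- GoodC (fun a b => Cplus (@?g a b) (@?h a b)) => apply (GoodC_plus g h); goodc
 | |- GoodC (fun a b => Cminus (@?g a b) (@?h a b)) => apply (GoodC_minus g h); goodc
 | |- GoodC (fun a b => RtoC (@?g a b)) => apply (GoodC_R g); goodr
 | |- GoodC (fun a b => Kt ?t ?x a b) => apply GoodC_Kt
 | |- GoodC (fun a b => Kta ?t ?x a b) => apply GoodC_Kta
 | |- GoodC (fun a b => Ktb ?t ?x a b) => apply GoodC_Ktb
 | |- _ => try assumption
end.

Section IBPmain.
Variables (f : R -> R -> C) (a0 a1 b0 b1 : R) (tau : C) (x : R).
Hypothesis Hab : a0 <= a1.
Hypothesis Hb0 : 0 < b0.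
Hypothesis Hbb : b0 <= b1.
Hypothesis HVf : Vn a0 a1 b0 b1 f.
Hypothesis HGf : GoodC f.
Hypothesis HGa : GoodC (d_a f).
Hypothesis HGb : GoodC (d_b f).
Hypothesis HDa : forall a b, 0 < b -> CD (fun a => f a b) a (d_a f a b).
Hypothesis HDb : forall a b, 0 < b -> CD (fun b => f a b) b (d_b f a b).

Lemma HR9 : Rect (a0 - 1) (a1 + 1) (b0 / 2) (b1 + 1).
Proof. unfold Rect; lra. Qed.

Lemma IBP_main (al be dal dbe : R -> R -> R) (E : R -> R -> C) :
  (forall a b, 0 < b -> is_derive (fun a => al a b) a (dal a b)) ->
  (forall a b, 0 < b -> is_derive (fun b => be a b) b (dbe a b)) ->
  Good al -> Good be -> Good dal -> Good dbe -> GoodC E ->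
  (forall a b, 0 < b -> Cmult (E (x - a) b) (RtoC (rho b)) =
     Copp (Cmult Ci (Cplus (Cplus (Cplus (Cplus
       (Cmult (Cmult (RtoC (dal a b)) (Kt tau x a b)) (RtoC (rho b)))
       (Cmult (Cmult (RtoC (al a b)) (Kta tau x a b)) (RtoC (rho b))))
       (Cmult (Cmult (RtoC (dbe a b)) (Kt tau x a b)) (RtoC (rho b))))
       (Cmult (Cmult (RtoC (be a b)) (Ktb tau x a b)) (RtoC (rho b))))
       (Cmult (Cmult (RtoC (be a b)) (Kt tau x a b)) (RtoC (drho b)))))) ->
  DIC (a0 - 1) (a1 + 1) (b0 / 2) (b1 + 1)
    (fun a b => Cmult (Cmult (Kt tau x a b)
        (Cplus (Cmult (Cmult Ci (RtoC (al a b))) (d_a f a b)) (Cmult (Cmult Ci (RtoC (be a b))) (d_b f a b))))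
        (RtoC (rho b)))
  = JK f (a0 - 1) (a1 + 1) (b0 / 2) (b1 + 1) E x.
Proof.
  intros Hal Hbe Gal Gbe Gdal Gdbe GE HE.
  set (U := fun a b => Cmult (Cmult (Cmult (Cmult Ci (RtoC (al a b))) (Kt tau x a b)) (RtoC (rho b))) (f a b)).
  set (dU := fun a b => Cplus (Cplus
     (Cmult (Cmult (Cmult (Cmult Ci (RtoC (dal a b))) (Kt tau x a b)) (RtoC (rho b))) (f a b))
     (Cmult (Cmult (Cmult (Cmult Ci (RtoC (al a b))) (Kta tau x a b)) (RtoC (rho b))) (f a b)))
     (Cmult (Cmult (Cmult (Cmult Ci (RtoC (al a b))) (Kt tau x a b)) (RtoC (rho b))) (d_a f a b))).
  set (V := fun a b => Cmult (Cmult (Cmult (Cmult Ci (RtoC (be a b))) (Kt tau x a b)) (RtoC (rho b))) (f a b)).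
  set (dV := fun a b => Cplus (Cplus (Cplus
     (Cmult (Cmult (Cmult (Cmult Ci (RtoC (dbe a b))) (Kt tau x a b)) (RtoC (rho b))) (f a b))
     (Cmult (Cmult (Cmult (Cmult Ci (RtoC (be a b))) (Ktb tau x a b)) (RtoC (rho b))) (f a b)))
     (Cmult (Cmult (Cmult (Cmult Ci (RtoC (be a b))) (Kt tau x a b)) (RtoC (drho b))) (f a b)))
     (Cmult (Cmult (Cmult (Cmult Ci (RtoC (be a b))) (Kt tau x a b)) (RtoC (rho b))) (d_b f a b))).
  set (W := fun a b => Cmult (Cmult (E (x - a) b) (f a b)) (RtoC (rho b))).
  assert (GW : GoodC W).
  { unfold W. apply (GoodC_kf f HGf E x GE). }
  assert (GdU : GoodC dU). { unfold dU. goodc. }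
  assert (GdV : GoodC dV). { unfold dV. goodc. apply Good_drho. }
  assert (GV : GoodC V). { unfold V. goodc. }
  transitivity (DIC (a0 - 1) (a1 + 1) (b0 / 2) (b1 + 1) (fun a b => Cplus (Cplus (W a b) (dU a b)) (dV a b))).
  { apply DIC_ext. apply HR9. intros a b Hb. unfold W, dU, dV.
    replace (Cmult (Cmult (E (x - a) b) (f a b)) (RtoC (rho b))) with
      (Cmult (Cmult (E (x - a) b) (RtoC (rho b))) (f a b)) by ring.
    rewrite HE by exact Hb. ring. }
  rewrite (DIC_plus _ _ _ _ HR9 _ _ (GoodC_plus _ _ GW GdU) GdV).
  rewrite (DIC_plus _ _ _ _ HR9 _ _ GW GdU).
  rewrite (IBPaC _ _ _ _ HR9 U dU).
  rewrite (IBPbC _ _ _ _ HR9 V dV).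
  unfold JK, W. ring.
  - intros a b Hb. unfold V, dV.
    eapply CD_eq.
    apply (CD_mult (fun b => Cmult (Cmult (Cmult Ci (RtoC (be a b))) (Kt tau x a b)) (RtoC (rho b))) (fun b => f a b)).
    apply (CD_mult (fun b => Cmult (Cmult Ci (RtoC (be a b))) (Kt tau x a b)) (fun b => RtoC (rho b))).
    apply (CD_mult (fun b => Cmult Ci (RtoC (be a b))) (fun b => Kt tau x a b)).
    apply (CD_mult (fun b => Ci) (fun b => RtoC (be a b))).
    apply CD_const. apply CD_R, Hbe, Hb. apply Kt_db, Hb. apply CD_R, rho_der, Hb. apply HDb, Hb.
    ring.
  - exact GV.
  - exact GdV.
  - intros a. unfold V.
    split; [rewrite (HVf a (b0 / 2)); [ring | lra | right; right; left; lra]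
           |rewrite (HVf a (b1 + 1)); [ring | lra | right; right; right; lra]].
  - intros a b Hb. unfold U, dU.
    eapply CD_eq.
    apply (CD_mult (fun a => Cmult (Cmult (Cmult Ci (RtoC (al a b))) (Kt tau x a b)) (RtoC (rho b))) (fun a => f a b)).
    apply (CD_mult (fun a => Cmult (Cmult Ci (RtoC (al a b))) (Kt tau x a b)) (fun a => RtoC (rho b))).
    apply (CD_mult (fun a => Cmult Ci (RtoC (al a b))) (fun a => Kt tau x a b)).
    apply (CD_mult (fun a => Ci) (fun a => RtoC (al a b))).
    apply CD_const. apply CD_R, Hal, Hb. apply Kt_da, Hb. apply CD_const. apply HDa, Hb.
    ring.
  - exact GdU.
  - intros b Hb. unfold U.
    split; [rewrite (HVf (a0 - 1) b); [ring | lra | left; lra]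
           |rewrite (HVf (a1 + 1) b); [ring | lra | right; left; lra]].
Qed.
End IBPmain.


Open Scope R_scope.

Lemma CpowS (z : C) n : Cpow z (S n) = Cmult z (Cpow z n). Proof. reflexivity. Qed.
Lemma Cpow0 (z : C) : Cpow z 0 = 1%C. Proof. reflexivity. Qed.
Lemma Ci2 : (Ci ^ 2 = -1)%C. Proof. apply C_ext; simpl; ring. Qed.
Lemma Ci3 : (Ci ^ 3 = - Ci)%C. Proof. apply C_ext; simpl; ring. Qed.
Lemma Ci4 : (Ci ^ 4 = 1)%C. Proof. apply C_ext; simpl; ring. Qed.
Lemma Ci5 : (Ci ^ 5 = Ci)%C. Proof. apply C_ext; simpl; ring. Qed.
Lemma Ci6 : (Ci ^ 6 = -1)%C. Proof. apply C_ext; simpl; ring. Qed.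
Lemma Ci_neq0 : Ci <> 0%C.
Proof. intro E. apply (f_equal Im) in E. rewrite Im_Ci, Im_0 in E. lra. Qed.
Lemma RtoC_neq0 r : r <> 0 -> RtoC r <> 0%C.
Proof. intros H E. apply (f_equal Re) in E. rewrite Re_RtoC, Re_0 in E. auto. Qed.

Section RC.
Variables (u b : R).
Hypothesis Hb : 0 < b.
Open Scope C_scope.
Lemma rc_ww : RtoC (ww u b) = (RtoC u * RtoC u + RtoC b * RtoC b) / RtoC b.
Proof. assert (b <> 0)%R by lra. apply C_ext; csimp; unfold ww, rho, drho; field; repeat split; try nra. Qed.
Lemma rc_rho : RtoC (rho b) = / (4 * RtoC b * RtoC b).
Proof. assert (b <> 0)%R by lra. apply C_ext; csimp; unfold ww, rho, drho; field; repeat split; try nra. Qed.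
Lemma rc_drho : RtoC (drho b) = - / (2 * RtoC b * RtoC b * RtoC b).
Proof. assert (b <> 0)%R by lra. apply C_ext; csimp; unfold ww, rho, drho; field; repeat split; try nra. Qed.
Lemma rc_2ub : RtoC (2 * u / b) = 2 * RtoC u / RtoC b.
Proof. assert (b <> 0)%R by lra. apply C_ext; csimp; unfold ww, rho, drho; field; repeat split; try nra. Qed.
Lemma rc_m2ub : RtoC (- (2 * u / b)) = - (2 * RtoC u / RtoC b).
Proof. assert (b <> 0)%R by lra. apply C_ext; csimp; unfold ww, rho, drho; field; repeat split; try nra. Qed.
Lemma rc_2b : RtoC (2 / b) = 2 / RtoC b.
Proof. assert (b <> 0)%R by lra. apply C_ext; csimp; unfold ww, rho, drho; field; repeat split; try nra. Qed.
Lemma rc_1uub : RtoC (1 - u * u / (b * b)) = 1 - RtoC u * RtoC u / (RtoC b * RtoC b).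
Proof. assert (b <> 0)%R by lra. apply C_ext; csimp; unfold ww, rho, drho; field; repeat split; try nra. Qed.
Lemma rc_m2b : RtoC (- / (2 * b)) = - / (2 * RtoC b).
Proof. assert (b <> 0)%R by lra. apply C_ext; csimp; unfold ww, rho, drho; field; repeat split; try nra. Qed.
End RC.

Lemma KK_n0 (tau : C) u b : 0 < b -> KK tau u b = Cmult (RtoC (ww u b)) (KK (Cminus tau 1) u b).
Proof.
  intros Hb. rewrite <- KK_shift by exact Hb. f_equal. ring.
Qed.
Lemma KK_n1 (tau : C) u b : 0 < b ->
  KK (Cplus tau 1) u b = Cmult (RtoC (ww u b)) (Cmult (RtoC (ww u b)) (KK (Cminus tau 1) u b)).
Proof.
  intros Hb. rewrite KK_shift by exact Hb. rewrite KK_n0 by exact Hb. reflexivity.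
Qed.

Ltac kid Hb tau u b :=
  rewrite ?(KK_n1 tau u b Hb), ?(KK_n0 tau u b Hb);
  rewrite ?(rc_ww u b Hb), ?(rc_rho b Hb), ?(rc_drho b Hb), ?(rc_2ub u b Hb), ?(rc_m2ub u b Hb),
          ?(rc_2b b Hb), ?(rc_1uub u b Hb), ?(rc_m2b b Hb);
  rewrite ?RtoC_minus, ?RtoC_mult, ?RtoC_plus, ?RtoC_opp;
  field_simplify_eq; [ cbv beta; rewrite ?Ci2, ?Ci3, ?Ci4, ?Ci5, ?Ci6; ring
                     | repeat split; auto using Ci_neq0, RtoC_neq0 with real].


Open Scope R_scope.

Ltac goodc2 := lazymatch goal with
 | |- GoodC (fun _ _ => ?c) => apply GoodC_const
 | |- GoodC (fun a b => Cmult (@?g a b) (@?h a b)) => apply (GoodC_mult g h); goodc2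
 | |- GoodC (fun a b => Cplus (@?g a b) (@?h a b)) => apply (GoodC_plus g h); goodc2
 | |- GoodC (fun a b => Cminus (@?g a b) (@?h a b)) => apply (GoodC_minus g h); goodc2
 | |- GoodC (fun a b => RtoC (@?g a b)) => apply (GoodC_R g); goodr
 | |- GoodC (fun a b => Kt ?t ?x a b) => apply GoodC_Kt
 | |- GoodC (fun a b => KK ?s a b) => apply GoodC_KK
 | |- GoodC (fun a b => KK ?s (?y - a) b) => apply (GoodC_shift y (KK s)), GoodC_KK
 | |- _ => try assumption
end.

Section Main.
Variables (f : R -> R -> C) (a0 a1 b0 b1 : R) (tau : C).
Hypothesis Hab : a0 <= a1.
Hypothesis Hb0 : 0 < b0.
Hypothesis Hbb : b0 <= b1.
Hypothesis HVf : Vn a0 a1 b0 b1 f.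
Hypothesis HGf : GoodC f.
Hypothesis HGa : GoodC (d_a f).
Hypothesis HGb : GoodC (d_b f).
Hypothesis HDa : forall a b, 0 < b -> CD (fun a => f a b) a (d_a f a b).
Hypothesis HDb : forall a b, 0 < b -> CD (fun b => f a b) b (d_b f a b).
Hypothesis Hn1 : (1 + tau <> 0)%C.
Hypothesis Hn2 : (1 + 2 * tau <> 0)%C.

Definition JKf := JK f (a0 - 1) (a1 + 1) (b0 / 2) (b1 + 1).
Lemma HRm : Rect (a0 - 1) (a1 + 1) (b0 / 2) (b1 + 1).
Proof. unfold Rect; lra. Qed.

Lemma Jfun s y : J f s y = JKf (KK s) y.
Proof.
  unfold J, JKf, JK.
  apply (IL _ (fun a b => Cmult (KK s (y - a) b) (f a b)) a0 a1 b0 b1 Hab Hb0 Hbb).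
  - intros a b Hb. rewrite Kker_eq by exact Hb. reflexivity.
  - goodc2.
  - intros a b Hb Hout. rewrite (HVf a b Hb Hout). ring.
Qed.

Definition K1 (u b : R) : C := Cmult (RtoC (2 * u / b)) (Cmult (Cplus tau 1) (KK tau u b)).
Definition K2 (u b : R) : C := Cmult (Cplus tau 1) (Cplus (Cmult (RtoC (2 / b)) (KK tau u b))
   (Cmult (RtoC (2 * u / b)) (Cmult (RtoC (2 * u / b)) (Cmult tau (KK (Cminus tau 1) u b))))).

Lemma GK1 : GoodC K1. Proof. unfold K1. goodc2. Qed.
Lemma GK2 : GoodC K2. Proof. unfold K2. goodc2. Qed.

Lemma CD0 u b : 0 < b -> CD (fun u => KK (Cplus tau 1) u b) u (K1 u b).
Proof.
  intros Hb. eapply CD_eq. apply KK_du, Hb. unfold K1.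
  replace (Cminus (Cplus tau 1) 1) with tau by ring. reflexivity.
Qed.
Lemma CD1 u b : 0 < b -> CD (fun u => K1 u b) u (K2 u b).
Proof.
  intros Hb. unfold K1. eapply CD_eq.
  apply (CD_mult (fun u => RtoC (2 * u / b)) (fun u => Cmult (Cplus tau 1) (KK tau u b))).
  apply CD_R. apply (is_derive_eq _ _ (2 / b)); [| reflexivity]. auto_derive. lra. field; lra.
  apply (CD_mult (fun _ => Cplus tau 1) (fun u => KK tau u b)). apply CD_const. apply KK_du, Hb.
  unfold K2. ring.
Qed.

Lemma DerJp : DerivC (JKf (KK (Cplus tau 1))) = JKf K1.
Proof.
  apply functional_extensionality; intros y. apply DerivC_CD.
  apply (JK_CD f _ _ _ _ HRm HGf). apply CD0. apply GoodC_KK. apply GK1.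
Qed.
Lemma CDJ1 y : CD (JKf K1) y (JKf K2 y).
Proof. apply (JK_CD f _ _ _ _ HRm HGf). apply CD1. apply GK1. apply GK2. Qed.


Lemma HGKm : GoodC (KK (Cminus tau 1)). Proof. apply GoodC_KK. Qed.
Lemma GKs (c : C) k : GoodC k -> GoodC (fun u b => Cmult c (k u b)).
Proof. intros; apply (GoodC_mult (fun _ _ => c) k); [apply GoodC_const | assumption]. Qed.

Open Scope C_scope.
Lemma id1 x : J (fun a b => / (pt a b - Cconj (pt a b)) * f a b) tau x =
  / (4 * Ci * (1 + tau) * (1 + 2 * tau)) * JKf K2 x
    - (2 * Ci * tau) / (2 * (1 + 2 * tau)) * JKf (KK (tau - 1)) x.
Proof.
  unfold J.
  rewrite (IL _ (fun a b => Cmult (KK tau (x - a) b) (Cmult (Cmult (RtoC (- / (2 * b))) Ci) (f a b))) a0 a1 b0 b1 Hab Hb0 Hbb).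
  2: { intros a b Hb; rewrite Kker_eq by exact Hb; f_equal; f_equal. unfold pt. apply C_ext; csimp; field; repeat split; try lra; apply Rgt_not_eq; nra. }
  2: { goodc2. }
  2: { intros a b Hb Hout; rewrite (HVf a b Hb Hout); ring. }
  unfold JKf.
  rewrite <- (JK_scal f _ _ _ _ HRm HGf _ K2 x GK2).
  rewrite <- (JK_scal f _ _ _ _ HRm HGf _ (KK (tau - 1)) x HGKm).
  rewrite <- (JK_minus f _ _ _ _ HRm HGf _ _ x (GKs _ _ GK2) (GKs _ _ HGKm)).
  unfold JK. apply DIC_ext; [apply HRm|]. intros a b Hb. cbv beta. unfold K2.
  kid Hb tau (x - a)%R b.
Qed.

Lemma idL (al be dal dbe : R -> R -> R) (E : R -> R -> C) (Lf : R -> R -> C) x :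
  (forall a b, (0 < b)%R -> is_derive (fun a => al a b) a (dal a b)) ->
  (forall a b, (0 < b)%R -> is_derive (fun b => be a b) b (dbe a b)) ->
  Good al -> Good be -> Good dal -> Good dbe -> GoodC E ->
  (forall a b, (0 < b)%R -> Cmult (E (x - a)%R b) (RtoC (rho b)) =
     Copp (Cmult Ci (Cplus (Cplus (Cplus (Cplus
       (Cmult (Cmult (RtoC (dal a b)) (Kt tau x a b)) (RtoC (rho b)))
       (Cmult (Cmult (RtoC (al a b)) (Kta tau x a b)) (RtoC (rho b))))
       (Cmult (Cmult (RtoC (dbe a b)) (Kt tau x a b)) (RtoC (rho b))))
       (Cmult (Cmult (RtoC (be a b)) (Ktb tau x a b)) (RtoC (rho b))))
       (Cmult (Cmult (RtoC (be a b)) (Kt tau x a b)) (RtoC (drho b)))))) ->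
  (forall a b, (0 < b)%R -> Lf a b =
     Cplus (Cmult (Cmult Ci (RtoC (al a b))) (d_a f a b)) (Cmult (Cmult Ci (RtoC (be a b))) (d_b f a b))) ->
  J Lf tau x = JKf E x.
Proof.
  intros Hal Hbe Gal Gbe Gdal Gdbe GE HE HL. unfold J.
  rewrite (IL _ (fun a b => Cmult (Kt tau x a b)
     (Cplus (Cmult (Cmult Ci (RtoC (al a b))) (d_a f a b)) (Cmult (Cmult Ci (RtoC (be a b))) (d_b f a b))))
     a0 a1 b0 b1 Hab Hb0 Hbb).
  2: { intros a b Hb; rewrite Kker_eq by exact Hb; rewrite HL by exact Hb; reflexivity. }
  2: { goodc2. }
  2: { intros a b Hb Hout. rewrite (Vn_da f a0 a1 b0 b1 HVf a b Hb Hout), (Vn_db f a0 a1 b0 b1 HVf a b Hb Hout). ring. }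
  apply (IBP_main f a0 a1 b0 b1 tau x Hab Hb0 Hbb HVf HGf HGa HGb HDa HDb al be dal dbe E); auto.
Qed.

Lemma isd_c (c : R) x : is_derive (fun _ : R => c) x 0%R.
Proof. apply isd_const. Qed.

Lemma id2 x : J (fun a b => d_z f a b - d_zbar f a b) tau x =
  (2 + tau) / (2 * Ci * (1 + tau) * (1 + 2 * tau)) * JKf K2 x
    + (2 * Ci * tau * (-1 + tau)) / (1 + 2 * tau) * JKf (KK (tau - 1)) x.
Proof.
  unfold JKf.
  rewrite <- (JK_scal f _ _ _ _ HRm HGf _ K2 x GK2).
  rewrite <- (JK_scal f _ _ _ _ HRm HGf _ (KK (tau - 1)) x HGKm).
  rewrite <- (JK_plus f _ _ _ _ HRm HGf _ _ x (GKs _ _ GK2) (GKs _ _ HGKm)).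
  apply (idL (fun _ _ => 0%R) (fun _ _ => (-1)%R) (fun _ _ => 0%R) (fun _ _ => 0%R)).
  - intros; apply isd_c.
  - intros; apply isd_c.
  - goodr. - goodr. - goodr. - goodr.
  - apply (GoodC_plus (fun u b => Cmult _ (K2 u b)) (fun u b => Cmult _ (KK (tau - 1) u b))); apply GKs; [apply GK2 | apply HGKm].
  - intros a b Hb. cbv beta. unfold K2, Kt, Kta, Ktb. kid Hb tau (x - a)%R b.
  - intros a b Hb. unfold d_z, d_zbar. apply C_ext; csimp; field.
Qed.

Ltac goodc3 := lazymatch goal with
 | |- GoodC (fun _ _ => ?c) => apply GoodC_const
 | |- GoodC (fun a b => Cmult (@?g a b) (@?h a b)) => apply (GoodC_mult g h); goodc3
 | |- GoodC (fun a b => Cplus (@?g a b) (@?h a b)) => apply (GoodC_plus g h); goodc3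
 | |- GoodC (fun a b => Cminus (@?g a b) (@?h a b)) => apply (GoodC_minus g h); goodc3
 | |- GoodC (fun a b => K1 a b) => apply GK1
 | |- GoodC (fun a b => K2 a b) => apply GK2
 | |- GoodC (fun a b => KK ?s a b) => apply GoodC_KK
 | |- _ => try assumption
end.

Lemma id3 x : J (fun a b => pt a b * d_z f a b - Cconj (pt a b) * d_zbar f a b) tau x =
  (2 + tau) / (2 * Ci * (1 + tau) * (1 + 2 * tau)) * (RtoC x * JKf K2 x)
    - (2 + tau) / (2 * Ci * (1 + tau)) * JKf K1 x
    + (2 * Ci * (-1 + tau) * tau) / (1 + 2 * tau) * (RtoC x * JKf (KK (tau - 1)) x).
Proof.
  unfold JKf.
  rewrite <- (JK_scal f _ _ _ _ HRm HGf (RtoC x) K2 x GK2).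
  rewrite <- (JK_scal f _ _ _ _ HRm HGf (RtoC x) (KK (tau - 1)) x HGKm).
  rewrite <- (JK_scal f _ _ _ _ HRm HGf ((2 + tau) / (2 * Ci * (1 + tau) * (1 + 2 * tau)))
      (fun u b => RtoC x * K2 u b) x ltac:(goodc3)).
  rewrite <- (JK_scal f _ _ _ _ HRm HGf ((2 + tau) / (2 * Ci * (1 + tau))) K1 x GK1).
  rewrite <- (JK_scal f _ _ _ _ HRm HGf ((2 * Ci * (-1 + tau) * tau) / (1 + 2 * tau))
      (fun u b => RtoC x * KK (tau - 1) u b) x ltac:(goodc3)).
  rewrite <- (JK_minus f _ _ _ _ HRm HGf
      (fun u b => (2 + tau) / (2 * Ci * (1 + tau) * (1 + 2 * tau)) * (RtoC x * K2 u b))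
      (fun u b => (2 + tau) / (2 * Ci * (1 + tau)) * K1 u b) x ltac:(goodc3) ltac:(goodc3)).
  rewrite <- (JK_plus f _ _ _ _ HRm HGf
      (fun u b => (2 + tau) / (2 * Ci * (1 + tau) * (1 + 2 * tau)) * (RtoC x * K2 u b)
                  - (2 + tau) / (2 * Ci * (1 + tau)) * K1 u b)
      (fun u b => (2 * Ci * (-1 + tau) * tau) / (1 + 2 * tau) * (RtoC x * KK (tau - 1) u b)) x ltac:(goodc3) ltac:(goodc3)).
  apply (idL (fun _ b => b) (fun a _ => (- a)%R) (fun _ _ => 0%R) (fun _ _ => 0%R)).
  - intros; apply isd_c.
  - intros; apply isd_c.
  - goodr. - goodr. - goodr. - goodr.
  - goodc3.
  - intros a b Hb. cbv beta. unfold K2, K1, Kt, Kta, Ktb. kid Hb tau (x - a)%R b.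
  - intros a b Hb. unfold d_z, d_zbar. apply C_ext; csimp; field.
Qed.

Lemma id4 x : J (fun a b => pt a b * pt a b * d_z f a b
                - Cconj (pt a b) * Cconj (pt a b) * d_zbar f a b) tau x =
    (2 + tau) / (2 * Ci * (1 + tau) * (1 + 2 * tau)) * (RtoC x * RtoC x * JKf K2 x)
    - (2 * (2 + tau)) / (2 * Ci * (1 + tau)) * (RtoC x * JKf K1 x)
    + (2 * (2 + tau)) / (2 * Ci) * JKf (KK (tau + 1)) x
    + (2 * Ci * tau * (-1 + tau)) / (1 + 2 * tau) * (RtoC x * RtoC x * JKf (KK (tau - 1)) x).
Proof.
  unfold JKf.
  rewrite <- (JK_scal f _ _ _ _ HRm HGf (RtoC x * RtoC x) K2 x GK2).
  rewrite <- (JK_scal f _ _ _ _ HRm HGf (RtoC x * RtoC x) (KK (tau - 1)) x HGKm).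
  rewrite <- (JK_scal f _ _ _ _ HRm HGf (RtoC x) K1 x GK1).
  rewrite <- (JK_scal f _ _ _ _ HRm HGf ((2 + tau) / (2 * Ci * (1 + tau) * (1 + 2 * tau)))
      (fun u b => RtoC x * RtoC x * K2 u b) x ltac:(goodc3)).
  rewrite <- (JK_scal f _ _ _ _ HRm HGf ((2 * (2 + tau)) / (2 * Ci * (1 + tau)))
      (fun u b => RtoC x * K1 u b) x ltac:(goodc3)).
  rewrite <- (JK_scal f _ _ _ _ HRm HGf ((2 * (2 + tau)) / (2 * Ci)) (KK (tau + 1)) x (GoodC_KK _)).
  rewrite <- (JK_scal f _ _ _ _ HRm HGf ((2 * Ci * tau * (-1 + tau)) / (1 + 2 * tau))
      (fun u b => RtoC x * RtoC x * KK (tau - 1) u b) x ltac:(goodc3)).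
  rewrite <- (JK_minus f _ _ _ _ HRm HGf
      (fun u b => (2 + tau) / (2 * Ci * (1 + tau) * (1 + 2 * tau)) * (RtoC x * RtoC x * K2 u b))
      (fun u b => (2 * (2 + tau)) / (2 * Ci * (1 + tau)) * (RtoC x * K1 u b)) x ltac:(goodc3) ltac:(goodc3)).
  rewrite <- (JK_plus f _ _ _ _ HRm HGf
      (fun u b => (2 + tau) / (2 * Ci * (1 + tau) * (1 + 2 * tau)) * (RtoC x * RtoC x * K2 u b)
                  - (2 * (2 + tau)) / (2 * Ci * (1 + tau)) * (RtoC x * K1 u b))
      (fun u b => (2 * (2 + tau)) / (2 * Ci) * KK (tau + 1) u b) x ltac:(goodc3) ltac:(goodc3)).
  rewrite <- (JK_plus f _ _ _ _ HRm HGf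
      (fun u b => (2 + tau) / (2 * Ci * (1 + tau) * (1 + 2 * tau)) * (RtoC x * RtoC x * K2 u b)
                  - (2 * (2 + tau)) / (2 * Ci * (1 + tau)) * (RtoC x * K1 u b)
                  + (2 * (2 + tau)) / (2 * Ci) * KK (tau + 1) u b)
      (fun u b => (2 * Ci * tau * (-1 + tau)) / (1 + 2 * tau) * (RtoC x * RtoC x * KK (tau - 1) u b)) x ltac:(goodc3) ltac:(goodc3)).
  apply (idL (fun a b => (2 * a * b)%R) (fun a b => (b * b - a * a)%R) (fun _ b => (2 * b)%R) (fun _ b => (2 * b)%R)).
  - intros a b Hb. auto_derive; auto. ring.
  - intros a b Hb. auto_derive; auto. ring.
  - goodr. - goodr. - goodr. - goodr.
  - goodc3.
  - intros a b Hb. cbv beta. unfold K2, K1, Kt, Kta, Ktb. kid Hb tau (x - a)%R b.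
  - intros a b Hb. unfold d_z, d_zbar. apply C_ext; csimp; field.
Qed.
End Main.


Open Scope C_scope.

Theorem theorem1 (f : R -> R -> C) (Hf : Cc_infty_Lam f) (tau : C)
  (Ht1 : tau <> RtoC (-1)) (Ht2 : tau <> RtoC (- / 2)) (x : R) :
  let Jp := J f (tau + 1) in
  let Jm := J f (tau - 1) in
  let D1 := DerivC Jp x in
  let D2 := DerivC (DerivC Jp) x in
  ex_DerivC Jp x /\ ex_DerivC (DerivC Jp) x /\
  (* (1) multiplication by 1/(z - zbar) *)
  J (fun a b => / (pt a b - Cconj (pt a b)) * f a b) tau x =
    / (4 * Ci * (1 + tau) * (1 + 2 * tau)) * D2
    - (2 * Ci * tau) / (2 * (1 + 2 * tau)) * Jm x /\
  (* (2) d/dz - d/dzbar *)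
  J (fun a b => d_z f a b - d_zbar f a b) tau x =
    (2 + tau) / (2 * Ci * (1 + tau) * (1 + 2 * tau)) * D2
    + (2 * Ci * tau * (-1 + tau)) / (1 + 2 * tau) * Jm x /\
  (* (3) z d/dz - zbar d/dzbar *)
  J (fun a b => pt a b * d_z f a b - Cconj (pt a b) * d_zbar f a b) tau x =
    (2 + tau) / (2 * Ci * (1 + tau) * (1 + 2 * tau)) * (RtoC x * D2)
    - (2 + tau) / (2 * Ci * (1 + tau)) * D1
    + (2 * Ci * (-1 + tau) * tau) / (1 + 2 * tau) * (RtoC x * Jm x) /\
  (* (4) z^2 d/dz - zbar^2 d/dzbar *)
  J (fun a b => pt a b * pt a b * d_z f a b
                - Cconj (pt a b) * Cconj (pt a b) * d_zbar f a b) tau x =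
    (2 + tau) / (2 * Ci * (1 + tau) * (1 + 2 * tau)) * (RtoC x * RtoC x * D2)
    - (2 * (2 + tau)) / (2 * Ci * (1 + tau)) * (RtoC x * D1)
    + (2 * (2 + tau)) / (2 * Ci) * Jp x
    + (2 * Ci * tau * (-1 + tau)) / (1 + 2 * tau) * (RtoC x * RtoC x * Jm x).
Proof.
  cbv zeta.
  destruct Hf as [Hsm [a0 [a1' [b0 [b1' [Hb0 Hsupp]]]]]].
  set (a1 := Rmax a0 a1'). set (b1 := Rmax b0 b1').
  assert (Hab : (a0 <= a1)%R) by apply Rmax_l.
  assert (Hbb : (b0 <= b1)%R) by apply Rmax_l.
  assert (HVf : Vn a0 a1 b0 b1 f).
  { intros a b Hb Hout. destruct (classic (f a b = 0%C)) as [E|E]; auto.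
    destruct (Hsupp a b Hb E) as [[Ha1 Ha2] [Hb1 Hb2]].
    generalize (Rmax_r a0 a1') (Rmax_r b0 b1'); fold a1 b1; intros.
    exfalso; destruct Hout as [Ho|[Ho|[Ho|Ho]]]; lra. }
  destruct (Hsm 1%nat) as [[C1 [D1 [E1 F1]]] [C2 [D2 [E2 F2]]]].
  assert (HGf : GoodC f) by (split; [exact C1 | exact C2]).
  assert (HGa : GoodC (d_a f)) by (split; [exact E1 | exact E2]).
  assert (HGb : GoodC (d_b f)) by (split; [exact F1 | exact F2]).
  assert (HDa : forall a b, (0 < b)%R -> CD (fun a => f a b) a (d_a f a b)).
  { intros a b Hb; split; apply Derive_correct; [apply (D1 a b Hb) | apply (D2 a b Hb)]. }
  assert (HDb : forall a b, (0 < b)%R -> CD (fun b => f a b) b (d_b f a b)).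
  { intros a b Hb; split; apply Derive_correct; [apply (D1 a b Hb) | apply (D2 a b Hb)]. }
  assert (Hn1 : 1 + tau <> 0).
  { intro E. apply Ht1. assert (E1' := f_equal Re E). assert (E2' := f_equal Im E).
    csimpH E1'. csimpH E2'. apply C_ext; csimp; lra. }
  assert (Hn2 : 1 + 2 * tau <> 0).
  { intro E. apply Ht2. assert (E1' := f_equal Re E). assert (E2' := f_equal Im E).
    csimpH E1'. csimpH E2'. apply C_ext; csimp; lra. }
  assert (EJp : J f (tau + 1) = JKf f a0 a1 b0 b1 (KK (tau + 1))).
  { apply functional_extensionality; intros y.
    apply (Jfun f a0 a1 b0 b1 Hab Hb0 Hbb HVf HGf). }
  assert (EJm : J f (tau - 1) = JKf f a0 a1 b0 b1 (KK (tau - 1))).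
  { apply functional_extensionality; intros y.
    apply (Jfun f a0 a1 b0 b1 Hab Hb0 Hbb HVf HGf). }
  rewrite EJp, EJm.
  rewrite (DerJp f a0 a1 b0 b1 tau Hab Hb0 Hbb HGf).
  rewrite (DerivC_CD _ _ _ (CDJ1 f a0 a1 b0 b1 tau Hab Hb0 Hbb HGf x)).
  split; [| split; [| split; [| split; [| split]]]].
  - eapply ex_DerivC_CD. apply (JK_CD f _ _ _ _ (HRm a0 a1 b0 b1 Hab Hb0 Hbb) HGf).
    apply CD0. apply GoodC_KK. apply GK1.
  - eapply ex_DerivC_CD. apply (CDJ1 f a0 a1 b0 b1 tau Hab Hb0 Hbb HGf x).
  - apply (id1 f a0 a1 b0 b1 tau Hab Hb0 Hbb HVf HGf Hn1 Hn2).
  - apply (id2 f a0 a1 b0 b1 tau Hab Hb0 Hbb HVf HGf HGa HGb HDa HDb Hn1 Hn2).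
  - apply (id3 f a0 a1 b0 b1 tau Hab Hb0 Hbb HVf HGf HGa HGb HDa HDb Hn1 Hn2).
  - apply (id4 f a0 a1 b0 b1 tau Hab Hb0 Hbb HVf HGf HGa HGb HDa HDb Hn1 Hn2).
Qed.
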